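(* Let $(V,m)$ be a discrete measure space, $(b,c)$ a graph over $(V,m)$, and let $Q$ with domain $D$ satisfy condition (C) with respect to $(b,c)$ (so $D\subseteq\widetilde F$). Then for $u\in D$ the following are equivalent: (i) $(\widetilde L+1)u=0$; (ii) $u$ is orthogonal to $D(Q^{(D)})$ with respect to $\langle\cdot,\cdot\rangle_Q$. Consequently, the Hilbert space $(D,\langle\cdot,\cdot\rangle_Q)$ is the orthogonal sum $D=D(Q^{(D)})\oplus\mathcal H^{(Q)}$, where $\mathcal H^{(Q)}=\{u\in D:(\widetilde L+1)u=0\}$.
   Context: $V$ is a finite or countably infinite set and $m:V\to(0,\infty)$; $(V,m)$ is a discrete measure space. $C(V)$ is the set of all functions $V\to\mathbb C$, $C_c(V)$ the finitely supported ones, and $\ell^2(V,m)$ carries $\langle u,v\rangle=\sum_x u(x)\overline{v(x)}m(x)$. A graph over $(V,m)$ is a pair $(b,c)$ with $c:V\to[0,\infty)$, $b:V\times V\to[0,\infty)$, $b(x,x)=0$, $b(x,y)=b(y,x)$, $\sum_y b(x,y)<\infty$. Let $\widetilde F=\{u\in C(V):\sum_y|b(x,y)u(y)|<\infty\ \forall x\}$ and $\widetilde L u(x)=\frac{1}{m(x)}\sum_y b(x,y)(u(x)-u(y))+\frac{c(x)}{m(x)}u(x)$ for $u\in\widetilde F$. $Q^{(N)}$ is the form on $\ell^2(V,m)$ with domain $D(Q^{(N)})=\{u\in\ell^2(V,m):\frac12\sum_{x,y}b(x,y)|u(x)-u(y)|^2+\sum_x c(x)|u(x)|^2<\infty\}$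 and $Q^{(N)}(u,v)=\frac12\sum_{x,y}b(x,y)(u(x)-u(y))\overline{(v(x)-v(y))}+\sum_x c(x)u(x)\overline{v(x)}$; it is non-negative, symmetric and closed. $Q^{(D)}$ is the closure of the restriction of $Q^{(N)}$ to $C_c(V)$. For a closed non-negative form $Q$, $\langle u,v\rangle_Q=Q(u,v)+\langle u,v\rangle$ on $D(Q)$. A symmetric form $Q$ on $\ell^2(V,m)$ with domain $D$ satisfies condition (C) w.r.t. $(b,c)$ if: (C0) $Q$ is non-negative and closed; (C1) $C_c(V)\subseteq D$; (C2) for all $u\in D$ and $v\in C_c(V)$ the sum $\sum_x u(x)\overline{\widetilde L v(x)}m(x)$ converges absolutely and equals $Q(u,v)$. *)

(* Defs.v *)
From Stdlib Require Import Reals Lra List Classical ClassicalEpsilon.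
Open Scope R_scope.

Definition Cx : Type := (R * R)%type.
Definition RC (r : R) : Cx := (r, 0).
Definition C0 : Cx := (0, 0).
Definition Cplus (z w : Cx) : Cx := (fst z + fst w, snd z + snd w).
Definition Copp (z : Cx) : Cx := (- fst z, - snd z).
Definition Cminus (z w : Cx) : Cx := Cplus z (Copp w).
Definition Cmult (z w : Cx) : Cx :=
  (fst z * fst w - snd z * snd w, fst z * snd w + snd z * fst w).
Definition Cconj (z : Cx) : Cx := (fst z, - snd z).
Definition Re (z : Cx) : R := fst z.
Definition Cabs (z : Cx) : R := sqrt (fst z * fst z + snd z * snd z).

Fixpoint Csum_list {V : Type} (f : V -> Cx) (l : list V) : Cx :=
  match l with nil => C0 | x :: l' => Cplus (f x) (Csum_list f l') end.
Fixpoint Rsum_list {V : Type} (f : V -> R) (l : list V) : R :=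
  match l with nil => 0 | x :: l' => f x + Rsum_list f l' end.

Definition Csummable {V : Type} (f : V -> Cx) : Prop :=
  exists M : R, forall l : list V, NoDup l -> Rsum_list (fun x => Cabs (f x)) l <= M.

Definition HasSumC {V : Type} (f : V -> Cx) (s : Cx) : Prop :=
  Csummable f /\
  forall eps : R, 0 < eps -> exists l0 : list V, forall l : list V,
    NoDup l -> incl l0 l -> Cabs (Cminus (Csum_list f l) s) < eps.

(* the value of the sum (0 if the sum does not exist) *)
Definition sumC {V : Type} (f : V -> Cx) : Cx :=
  match excluded_middle_informative (exists s, HasSumC f s) with
  | left H => proj1_sig (constructive_indefinite_description _ H)
  | right _ => C0
  end.

Definition countable (V : Type) : Prop :=
  exists enc : V -> nat, forall x y, enc x = enc y -> x = y.

Definition is_measure {V : Type} (m : V -> R) : Prop := forall x, 0 < m x.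

Definition is_graph {V : Type} (b : V -> V -> R) (c : V -> R) : Prop :=
  (forall x, 0 <= c x) /\
  (forall x y, 0 <= b x y) /\
  (forall x, b x x = 0) /\
  (forall x y, b x y = b y x) /\
  (forall x, Csummable (fun y => RC (b x y))).

Definition Cc {V : Type} (v : V -> Cx) : Prop :=
  exists l : list V, forall x, ~ In x l -> v x = C0.

Definition l2 {V : Type} (m : V -> R) (u : V -> Cx) : Prop :=
  Csummable (fun x => RC (Cabs (u x) * Cabs (u x) * m x)).

Definition ip {V : Type} (m : V -> R) (u v : V -> Cx) : Cx :=
  sumC (fun x => Cmult (Cmult (u x) (Cconj (v x))) (RC (m x))).

Definition Ftilde {V : Type} (b : V -> V -> R) (u : V -> Cx) : Prop :=
  forall x, Csummable (fun y => Cmult (RC (b x y)) (u y)).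

Definition Ltilde {V : Type} (m : V -> R) (b : V -> V -> R) (c : V -> R)
  (u : V -> Cx) (x : V) : Cx :=
  Cmult (RC (/ m x))
    (Cplus (sumC (fun y => Cmult (RC (b x y)) (Cminus (u x) (u y))))
           (Cmult (RC (c x)) (u x))).

Definition DQN {V : Type} (m : V -> R) (b : V -> V -> R) (c : V -> R)
  (u : V -> Cx) : Prop :=
  l2 m u /\
  Csummable (fun p : V * V =>
     RC (b (fst p) (snd p) * Cabs (Cminus (u (fst p)) (u (snd p)))
                           * Cabs (Cminus (u (fst p)) (u (snd p))))) /\
  Csummable (fun x => RC (c x * Cabs (u x) * Cabs (u x))).

Definition QN {V : Type} (b : V -> V -> R) (c : V -> R) (u v : V -> Cx) : Cx :=
  Cplus
    (Cmult (RC (1/2)) (sumC (fun p : V * V =>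
       Cmult (RC (b (fst p) (snd p)))
             (Cmult (Cminus (u (fst p)) (u (snd p)))
                    (Cconj (Cminus (v (fst p)) (v (snd p))))))))
    (sumC (fun x => Cmult (RC (c x)) (Cmult (u x) (Cconj (v x))))).

Definition formnorm {V : Type} (m : V -> R) (Q : (V -> Cx) -> (V -> Cx) -> Cx)
  (w : V -> Cx) : R := sqrt (Re (Q w w) + Re (ip m w w)).

Definition fminus {V : Type} (u v : V -> Cx) : V -> Cx := fun x => Cminus (u x) (v x).
Definition fplus {V : Type} (u v : V -> Cx) : V -> Cx := fun x => Cplus (u x) (v x).
Definition fscal {V : Type} (a : Cx) (u : V -> Cx) : V -> Cx := fun x => Cmult a (u x).

(* Dirichlet form Q^(D): closure of Q^(N) restricted to C_c(V); its domain is
   the closure of C_c(V) in D(Q^(N)) w.r.t. the Q^(N)-form norm. *)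
Definition DQD {V : Type} (m : V -> R) (b : V -> V -> R) (c : V -> R)
  (u : V -> Cx) : Prop :=
  DQN m b c u /\
  forall eps, 0 < eps -> exists phi, Cc phi /\
    formnorm m (QN b c) (fminus u phi) < eps.

Definition sym_form {V : Type} (m : V -> R) (D : (V -> Cx) -> Prop)
  (Q : (V -> Cx) -> (V -> Cx) -> Cx) : Prop :=
  (forall u, D u -> l2 m u) /\
  D (fun _ => C0) /\
  (forall u v, D u -> D v -> D (fplus u v)) /\
  (forall a u, D u -> D (fscal a u)) /\
  (forall u v w, D u -> D v -> D w -> Q (fplus u v) w = Cplus (Q u w) (Q v w)) /\
  (forall a u v, D u -> D v -> Q (fscal a u) v = Cmult a (Q u v)) /\
  (forall u v, D u -> D v -> Q v u = Cconj (Q u v)).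

Definition nonneg_form {V : Type} (D : (V -> Cx) -> Prop)
  (Q : (V -> Cx) -> (V -> Cx) -> Cx) : Prop :=
  forall u, D u -> 0 <= Re (Q u u).

Definition closed_form {V : Type} (m : V -> R) (D : (V -> Cx) -> Prop)
  (Q : (V -> Cx) -> (V -> Cx) -> Cx) : Prop :=
  forall un : nat -> V -> Cx,
    (forall n, D (un n)) ->
    (forall eps, 0 < eps -> exists N, forall n k, (N <= n)%nat -> (N <= k)%nat ->
        formnorm m Q (fminus (un n) (un k)) < eps) ->
    exists u, D u /\
      forall eps, 0 < eps -> exists N, forall n, (N <= n)%nat ->
        formnorm m Q (fminus (un n) u) < eps.

Definition condC {V : Type} (m : V -> R) (b : V -> V -> R) (c : V -> R)
  (D : (V -> Cx) -> Prop) (Q : (V -> Cx) -> (V -> Cx) -> Cx) : Prop :=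
  (nonneg_form D Q /\ closed_form m D Q) /\
  (forall v, Cc v -> D v) /\
  (forall u v, D u -> Cc v ->
     HasSumC (fun x => Cmult (Cmult (u x) (Cconj (Ltilde m b c v x))) (RC (m x)))
             (Q u v)).

Definition ipQ {V : Type} (m : V -> R) (Q : (V -> Cx) -> (V -> Cx) -> Cx)
  (u v : V -> Cx) : Cx := Cplus (Q u v) (ip m u v).

Definition HQ {V : Type} (m : V -> R) (b : V -> V -> R) (c : V -> R)
  (D : (V -> Cx) -> Prop) (u : V -> Cx) : Prop :=
  D u /\ forall x, Cplus (Ltilde m b c u x) (u x) = C0.

(* Main.v *)
Require Import Defs.
From Stdlib Require Import Reals List.
From Stdlib Require Import Lra Classical ClassicalEpsilon FunctionalExtensionality Permutation FinFun.
Open Scope R_scope.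

Module L1.

Definition RSummable {W : Type} (g : W -> R) : Prop :=
  exists M, forall l, NoDup l -> Rsum_list (fun x => Rabs (g x)) l <= M.
Definition HasSumR {W : Type} (g : W -> R) (s : R) : Prop :=
  RSummable g /\ forall eps, 0 < eps -> exists l0, forall l, NoDup l -> incl l0 l ->
     Rabs (Rsum_list g l - s) < eps.

Definition Wdec {W : Type} (x y : W) : {x = y} + {x <> y} := excluded_middle_informative (x = y).

Section RS.
Context {W : Type}.

Lemma Rsum_app (f : W -> R) l1 l2 : Rsum_list f (l1 ++ l2) = Rsum_list f l1 + Rsum_list f l2.
Proof. induction l1; simpl; [lra| rewrite IHl1; lra]. Qed.

Lemma Rsum_perm (f : W -> R) l1 l2 : Permutation l1 l2 -> Rsum_list f l1 = Rsum_list f l2.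
Proof. induction 1; simpl; lra. Qed.

Lemma Rsum_plus (f g : W -> R) l : Rsum_list (fun x => f x + g x) l = Rsum_list f l + Rsum_list g l.
Proof. induction l; simpl; lra. Qed.
Lemma Rsum_scal (k : R) (f : W -> R) l : Rsum_list (fun x => k * f x) l = k * Rsum_list f l.
Proof. induction l; simpl; [ring| rewrite IHl; ring]. Qed.
Lemma Rsum_ext (f g : W -> R) l : (forall x, f x = g x) -> Rsum_list f l = Rsum_list g l.
Proof. intros H; induction l; simpl; [lra| rewrite IHl, H; lra]. Qed.
Lemma Rsum_le (f g : W -> R) l : (forall x, f x <= g x) -> Rsum_list f l <= Rsum_list g l.
Proof. intros H; induction l; simpl; [lra| specialize (H a); lra]. Qed.
Lemma Rsum_nonneg (f : W -> R) l : (forall x, 0 <= f x) -> 0 <= Rsum_list f l.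
Proof. intros H; induction l; simpl; [lra| specialize (H a); lra]. Qed.
Lemma Rsum_abs (f : W -> R) l : Rabs (Rsum_list f l) <= Rsum_list (fun x => Rabs (f x)) l.
Proof. induction l; simpl. rewrite Rabs_R0; lra.
  eapply Rle_trans; [apply Rabs_triang|]. lra. Qed.

Lemma perm_remove (a : W) l : In a l -> NoDup l -> Permutation l (a :: remove Wdec a l).
Proof.
  induction l as [|x l IH]; simpl; intros Hin Hnd; [contradiction|].
  inversion Hnd; subst.
  destruct (Wdec a x) as [->|ne].
  - rewrite notin_remove by auto. auto.
  - destruct Hin as [->|Hin]; [congruence|].
    eapply perm_trans; [apply perm_skip, IH; auto|]. apply perm_swap.
Qed.

Lemma NoDup_remove' (a : W) l : NoDup l -> NoDup (remove Wdec a l).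
Proof.
  induction 1; simpl; [constructor|].
  destruct (Wdec a x); auto. constructor; auto.
  intro H1. apply in_remove in H1. tauto.
Qed.

Lemma Rsum_support (g : W -> R) l l' : NoDup l -> NoDup l' -> incl l l' ->
  (forall x, In x l' -> ~ In x l -> g x = 0) -> Rsum_list g l' = Rsum_list g l.
Proof.
  revert l; induction l' as [|a l' IH]; intros l Hl Hl' Hi Hz.
  - destruct l; [reflexivity| exfalso; apply (Hi w); left; auto].
  - inversion Hl'; subst. simpl.
    destruct (in_dec Wdec a l) as [Ha|Ha].
    + rewrite (Rsum_perm g _ _ (perm_remove a l Ha Hl)). simpl.
      rewrite (IH (remove Wdec a l)); auto.
      * apply NoDup_remove'; auto.
      * intros y Hy. apply in_remove in Hy. destruct Hy as [Hy ne].
        destruct (Hi y Hy); [congruence|auto].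
      * intros y Hy Hn. apply Hz; [right; auto|]. intro Hy2.
        apply Hn. apply in_in_remove; auto. intro; subst; tauto.
    + rewrite Hz by (simpl; auto). rewrite (IH l); auto; [lra| |].
      * intros y Hy. destruct (Hi y Hy); [subst; tauto|auto].
      * intros y Hy Hn. apply Hz; [right|]; auto.
Qed.

Lemma Rsum_le_incl (h : W -> R) l1 l2 : (forall x, 0 <= h x) -> NoDup l1 -> incl l1 l2 ->
  Rsum_list h l1 <= Rsum_list h l2.
Proof.
  intros Hh. revert l1; induction l2 as [|a l2 IH]; intros l1 Hl Hi.
  - destruct l1; [simpl; lra| exfalso; apply (Hi w); left; auto].
  - simpl. destruct (in_dec Wdec a l1) as [Ha|Ha].
    + rewrite (Rsum_perm h _ _ (perm_remove a l1 Ha Hl)). simpl.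
      assert (Rsum_list h (remove Wdec a l1) <= Rsum_list h l2); [|lra].
      apply IH. apply NoDup_remove'; auto.
      intros y Hy. apply in_remove in Hy. destruct Hy as [Hy ne].
      destruct (Hi y Hy); [congruence|auto].
    + specialize (Hh a). assert (Rsum_list h l1 <= Rsum_list h l2); [|lra].
      apply IH; auto. intros y Hy. destruct (Hi y Hy); [subst; tauto|auto].
Qed.

Definition lunion (l1 l2 : list W) := nodup Wdec (l1 ++ l2).
Lemma lunion_nd l1 l2 : NoDup (lunion l1 l2).
Proof. apply NoDup_nodup. Qed.
Lemma lunion_l l1 l2 : incl l1 (lunion l1 l2).
Proof. intros x Hx. apply nodup_In. apply in_or_app; auto. Qed.
Lemma lunion_r l1 l2 : incl l2 (lunion l1 l2).
Proof. intros x Hx. apply nodup_In. apply in_or_app; auto. Qed.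

Lemma HasSumR_unique (g : W -> R) s t : HasSumR g s -> HasSumR g t -> s = t.
Proof.
  intros [_ Hs] [_ Ht].
  destruct (Req_dec s t) as [|ne]; auto. exfalso.
  set (e := Rabs (s - t) / 2).
  assert (He : 0 < e) by (unfold e; assert (0 < Rabs (s-t)) by (apply Rabs_pos_lt; lra); lra).
  destruct (Hs e He) as [l1 H1]. destruct (Ht e He) as [l2 H2].
  specialize (H1 (lunion l1 l2) (lunion_nd _ _) (lunion_l _ _)).
  specialize (H2 (lunion l1 l2) (lunion_nd _ _) (lunion_r _ _)).
  assert (Rabs (s - t) <= Rabs (Rsum_list g (lunion l1 l2) - t) + Rabs (Rsum_list g (lunion l1 l2) - s)).
  { replace (s - t) with ((Rsum_list g (lunion l1 l2) - t) - (Rsum_list g (lunion l1 l2) - s)) by ring.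
    eapply Rle_trans; [apply Rabs_triang|]. rewrite Rabs_Ropp. lra. }
  unfold e in *. lra.
Qed.

Lemma RSummable_le (f g : W -> R) : (forall x, Rabs (f x) <= Rabs (g x)) -> RSummable g -> RSummable f.
Proof.
  intros H [M HM]. exists M. intros l Hl. eapply Rle_trans; [|apply (HM l Hl)].
  apply Rsum_le; auto.
Qed.

Lemma RSummable_plus (f g : W -> R) : RSummable f -> RSummable g -> RSummable (fun x => f x + g x).
Proof.
  intros [M1 H1] [M2 H2]. exists (M1 + M2). intros l Hl.
  eapply Rle_trans; [apply (Rsum_le _ (fun x => Rabs (f x) + Rabs (g x))); intros; apply Rabs_triang|].
  rewrite Rsum_plus. specialize (H1 l Hl); specialize (H2 l Hl); lra.
Qed.

Lemma RSummable_scal (k : R) (f : W -> R) : RSummable f -> RSummable (fun x => k * f x).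
Proof.
  intros [M H1]. exists (Rabs k * M). intros l Hl.
  rewrite (Rsum_ext _ (fun x => Rabs k * Rabs (f x))) by (intros; apply Rabs_mult).
  rewrite Rsum_scal. apply Rmult_le_compat_l; [apply Rabs_pos|auto].
Qed.

Lemma HasSumR_plus (f g : W -> R) a b : HasSumR f a -> HasSumR g b -> HasSumR (fun x => f x + g x) (a + b).
Proof.
  intros [Sf Hf] [Sg Hg]. split; [apply RSummable_plus; auto|].
  intros eps He. destruct (Hf (eps/2)) as [l1 H1]; [lra|]. destruct (Hg (eps/2)) as [l2 H2]; [lra|].
  exists (l1 ++ l2). intros l Hl Hi.
  rewrite Rsum_plus.
  assert (A := H1 l Hl (fun x h => Hi x (in_or_app _ _ _ (or_introl h)))).
  assert (B := H2 l Hl (fun x h => Hi x (in_or_app _ _ _ (or_intror h)))).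
  replace (Rsum_list f l + Rsum_list g l - (a + b)) with ((Rsum_list f l - a) + (Rsum_list g l - b)) by ring.
  eapply Rle_lt_trans; [apply Rabs_triang|]. lra.
Qed.

Lemma HasSumR_scal (k : R) (f : W -> R) a : HasSumR f a -> HasSumR (fun x => k * f x) (k * a).
Proof.
  intros [Sf Hf]. split; [apply RSummable_scal; auto|].
  intros eps He.
  destruct (Hf (eps / (Rabs k + 1))) as [l1 H1].
  { apply Rdiv_lt_0_compat; [lra| pose proof (Rabs_pos k); lra]. }
  exists l1. intros l Hl Hi. rewrite Rsum_scal.
  replace (k * Rsum_list f l - k * a) with (k * (Rsum_list f l - a)) by ring.
  rewrite Rabs_mult. specialize (H1 l Hl Hi).
  pose proof (Rabs_pos k). pose proof (Rabs_pos (Rsum_list f l - a)).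
  apply Rle_lt_trans with ((Rabs k + 1) * Rabs (Rsum_list f l - a)); [nra|].
  assert (Hk : 0 < Rabs k + 1) by lra.
  pose proof (Rmult_lt_compat_l _ _ _ Hk H1) as H2.
  replace ((Rabs k + 1) * (eps / (Rabs k + 1))) with eps in H2 by (field; lra). lra.
Qed.

Lemma HasSumR_ext (f g : W -> R) a : (forall x, f x = g x) -> HasSumR f a -> HasSumR g a.
Proof. intros H. replace g with f; auto. apply functional_extensionality; auto. Qed.

Lemma HasSumR_minus (f g : W -> R) a b : HasSumR f a -> HasSumR g b -> HasSumR (fun x => f x - g x) (a - b).
Proof.
  intros A B. apply (HasSumR_scal (-1)) in B.
  apply (HasSumR_ext (fun x => f x + -1 * g x)); [intros; ring|].
  replace (a - b) with (a + -1 * b) by ring. apply HasSumR_plus; auto.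
Qed.

Lemma HasSumR_fin (g : W -> R) l : NoDup l -> (forall x, ~ In x l -> g x = 0) ->
  HasSumR g (Rsum_list g l).
Proof.
  intros Hl Hz. split.
  - exists (Rsum_list (fun x => Rabs (g x)) l). intros l' Hl'.
    set (fl := filter (fun x => if in_dec Wdec x l then true else false) l').
    assert (Hf : forall x, In x fl <-> In x l' /\ In x l).
    { intros x; unfold fl; rewrite filter_In. destruct (in_dec Wdec x l); split; intros [A B]; auto; try discriminate; tauto. }
    assert (Hfn : NoDup fl) by (apply NoDup_filter; auto).
    rewrite (Rsum_support _ fl l' Hfn Hl').
    + apply Rsum_le_incl; [intros; apply Rabs_pos| auto|].
      intros x Hx. apply Hf in Hx; tauto.
    + intros x Hx; apply Hf in Hx; tauto.
    + intros x Hx Hn. rewrite Hz; [apply Rabs_R0|]. intro Hxl; apply Hn, Hf; auto.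
  - intros eps He. exists l. intros l' Hl' Hi.
    rewrite (Rsum_support g l l'); auto. unfold Rminus; rewrite Rplus_opp_r, Rabs_R0; auto.
Qed.

Lemma HasSumR_zero : HasSumR (fun _ : W => 0) 0.
Proof. apply (HasSumR_fin _ nil); [constructor| auto]. Qed.

Lemma HasSumR_partial_le (h : W -> R) s : (forall x, 0 <= h x) -> HasSumR h s ->
  forall l, NoDup l -> Rsum_list h l <= s.
Proof.
  intros Hh [_ H] l Hl. apply Rnot_lt_le. intro Hlt.
  destruct (H (Rsum_list h l - s)) as [l0 H0]; [lra|].
  specialize (H0 (lunion l0 l) (lunion_nd _ _) (lunion_l _ _)).
  assert (Rsum_list h l <= Rsum_list h (lunion l0 l)) by (apply Rsum_le_incl; auto; apply lunion_r).
  apply Rabs_def2 in H0. lra.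
Qed.

Lemma HasSumR_bound (h : W -> R) s M : HasSumR h s ->
  (forall l, NoDup l -> Rsum_list h l <= M) -> s <= M.
Proof.
  intros [_ H] HM. apply Rnot_lt_le. intro Hlt.
  destruct (H (s - M)) as [l0 H0]; [lra|].
  specialize (H0 (nodup Wdec l0) (NoDup_nodup _ _) (fun x h => proj2 (nodup_In _ _ _) h)).
  specialize (HM _ (NoDup_nodup Wdec l0)). apply Rabs_def2 in H0. lra.
Qed.

Lemma HasSumR_ge0 (h : W -> R) s : (forall x, 0 <= h x) -> HasSumR h s -> 0 <= s.
Proof. intros Hh Hs. apply (HasSumR_partial_le h s Hh Hs nil); constructor. Qed.

Lemma HasSumR_point (h : W -> R) s x : (forall x, 0 <= h x) -> HasSumR h s -> h x <= s.
Proof.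
  intros Hh Hs. pose proof (HasSumR_partial_le h s Hh Hs (x :: nil)). simpl in H.
  assert (h x + 0 <= s) by (apply H; constructor; [simpl; tauto| constructor]). lra.
Qed.

Lemma HasSumR_mono (f g : W -> R) a b : (forall x, f x <= g x) -> HasSumR f a -> HasSumR g b -> a <= b.
Proof.
  intros H A B. pose proof (HasSumR_minus g f b a B A).
  apply HasSumR_ge0 in H0; [lra|]. intros x; specialize (H x); lra.
Qed.

Lemma HasSumR_nonneg_exists (h : W -> R) : (forall x, 0 <= h x) -> RSummable h -> exists s, HasSumR h s.
Proof.
  intros Hh [M HM].
  set (E := fun r => exists l, NoDup l /\ r = Rsum_list h l).
  assert (Hb : bound E).
  { exists M. intros r [l [Hl ->]]. eapply Rle_trans; [|apply (HM l Hl)].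
    apply Rsum_le. intros; rewrite Rabs_pos_eq; auto; lra. }
  assert (Hne : exists x, E x) by (exists 0; exists nil; split; [constructor|auto]).
  destruct (completeness E Hb Hne) as [S [HS1 HS2]].
  exists S. split; [exists M; auto|].
  intros eps He.
  assert (exists l0, NoDup l0 /\ S - eps < Rsum_list h l0) as [l0 [Hl0 H0]].
  { apply NNPP. intro Hn. assert (S <= S - eps); [|lra].
    apply HS2. intros r [l [Hl ->]]. apply Rnot_lt_le. intro Hlt. apply Hn. exists l; auto. }
  exists l0. intros l Hl Hi.
  assert (Rsum_list h l0 <= Rsum_list h l) by (apply Rsum_le_incl; auto).
  assert (Rsum_list h l <= S) by (apply HS1; exists l; auto).
  apply Rabs_def1; lra.
Qed.

Lemma HasSumR_exists (g : W -> R) : RSummable g -> exists s, HasSumR g s.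
Proof.
  intros Hg.
  destruct (HasSumR_nonneg_exists (fun x => Rmax (g x) 0)) as [a Ha].
  { intros; apply Rmax_r. }
  { eapply RSummable_le; [|apply Hg]. intros x. unfold Rmax; destruct (Rle_dec (g x) 0);
    rewrite ?Rabs_R0; [apply Rabs_pos| lra]. }
  destruct (HasSumR_nonneg_exists (fun x => Rmax (- g x) 0)) as [b Hb].
  { intros; apply Rmax_r. }
  { eapply RSummable_le; [|apply Hg]. intros x. unfold Rmax; destruct (Rle_dec (- g x) 0);
    rewrite ?Rabs_R0; [apply Rabs_pos| rewrite Rabs_Ropp; lra]. }
  exists (a - b). eapply HasSumR_ext; [|apply (HasSumR_minus _ _ _ _ Ha Hb)].
  intros x; simpl. unfold Rmax; destruct (Rle_dec (g x) 0), (Rle_dec (- g x) 0); lra.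
Qed.

Lemma HasSumR_summable (g : W -> R) s : HasSumR g s -> RSummable g.
Proof. intros [H _]; auto. Qed.

End RS.

End L1.
Import L1.

Module L2.

Section Inj.
Context {W U : Type} (e : W -> U) (einj : forall w1 w2, e w1 = e w2 -> w1 = w2).

Definition pre (u : U) : option W :=
  match excluded_middle_informative (exists w, e w = u) with
  | left H => Some (proj1_sig (constructive_indefinite_description _ H))
  | right _ => None end.

Lemma pre_some u w : pre u = Some w -> e w = u.
Proof.
  unfold pre. destruct (excluded_middle_informative _) as [H|H]; [|discriminate].
  intros Heq; inversion Heq. destruct (constructive_indefinite_description _ H); simpl; auto.
Qed.

Lemma pre_e w : pre (e w) = Some w.
Proof.
  unfold pre. destruct (excluded_middle_informative _) as [H|H].
  - f_equal. destruct (constructive_indefinite_description _ H); simpl; auto.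
  - exfalso; apply H; exists w; auto.
Qed.

Lemma pre_none u : pre u = None -> forall w, e w <> u.
Proof. intros H w Hw. subst. rewrite pre_e in H. discriminate. Qed.

Definition prelist (l : list U) : list W :=
  flat_map (fun u => match pre u with Some w => w :: nil | None => nil end) l.

Lemma prelist_In l w : In w (prelist l) <-> In (e w) l.
Proof.
  unfold prelist. rewrite in_flat_map. split.
  - intros [u [Hu Hw]]. destruct (pre u) eqn:E; [|contradiction].
    destruct Hw as [->|[]]. apply pre_some in E. subst; auto.
  - intros H. exists (e w). rewrite pre_e. simpl; auto.
Qed.

Lemma prelist_nd l : NoDup l -> NoDup (prelist l).
Proof.
  induction 1; simpl; [constructor|].
  destruct (pre x) eqn:E; simpl; auto.
  constructor; auto. rewrite prelist_In. apply pre_some in E. subst; auto.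
Qed.

Lemma prelist_sum (g : U -> R) l : (forall u, g u <> 0 -> exists w, e w = u) ->
  Rsum_list g l = Rsum_list (fun w => g (e w)) (prelist l).
Proof.
  intros Hg. induction l as [|u l IH]; simpl; auto.
  destruct (pre u) eqn:E; simpl.
  - apply pre_some in E; subst. rewrite IH; auto.
  - destruct (Req_dec (g u) 0) as [H0|H0].
    + rewrite H0, IH; ring.
    + destruct (Hg u H0) as [w Hw]. exfalso; apply (pre_none u E w Hw).
Qed.

Lemma HasSumR_inj (g : U -> R) s : (forall u, g u <> 0 -> exists w, e w = u) ->
  HasSumR (fun w => g (e w)) s -> HasSumR g s.
Proof.
  intros Hg [[M HM] Hc]. split.
  - exists M. intros l Hl. rewrite (prelist_sum (fun u => Rabs (g u))).
    + apply HM, prelist_nd; auto.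
    + intros u Hu. apply Hg. intro H0; apply Hu; rewrite H0; apply Rabs_R0.
  - intros eps He. destruct (Hc eps He) as [l0 H0]. exists (map e l0).
    intros l Hl Hi. rewrite (prelist_sum g l Hg). apply H0.
    + apply prelist_nd; auto.
    + intros w Hw. apply prelist_In. apply Hi. apply in_map; auto.
Qed.
End Inj.

Lemma HasSumR_swap {V : Type} (h : V * V -> R) s :
  HasSumR h s -> HasSumR (fun p => h (snd p, fst p)) s.
Proof.
  intros H. apply (HasSumR_inj (fun p : V * V => (snd p, fst p))).
  - intros [a b] [c d]; simpl; intros Heq; inversion Heq; auto.
  - intros [a b] _. exists (b, a); auto.
  - eapply HasSumR_ext; [|apply H]. intros [a b]; auto.
Qed.

Lemma HasSumR_row {V : Type} (x : V) (g : V -> R) s :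
  HasSumR g s -> HasSumR (fun p : V * V => if Wdec (fst p) x then g (snd p) else 0) s.
Proof.
  intros H. apply (HasSumR_inj (fun y => (x, y))).
  - intros a b Heq; inversion Heq; auto.
  - intros [a b] Hne. simpl in Hne. destruct (Wdec a x) as [->|]; [|lra]. exists b; auto.
  - eapply HasSumR_ext; [|apply H]. intros y; simpl. destruct (Wdec x x); [auto|congruence].
Qed.

End L2.
Import L2.

Module L3.

Lemma Cx_eq (z w : Cx) : fst z = fst w -> snd z = snd w -> z = w.
Proof. destruct z, w; simpl; intros; subst; auto. Qed.
Ltac ceq := apply Cx_eq; simpl; ring.

Lemma Cabs_ge_fst z : Rabs (fst z) <= Cabs z.
Proof.
  unfold Cabs. rewrite <- sqrt_Rsqr_abs. apply sqrt_le_1_alt. unfold Rsqr.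
  pose proof (Rle_0_sqr (snd z)). unfold Rsqr in H. lra.
Qed.
Lemma Cabs_ge_snd z : Rabs (snd z) <= Cabs z.
Proof.
  unfold Cabs. rewrite <- sqrt_Rsqr_abs. apply sqrt_le_1_alt. unfold Rsqr.
  pose proof (Rle_0_sqr (fst z)). unfold Rsqr in H. lra.
Qed.
Lemma Cabs_le z : Cabs z <= Rabs (fst z) + Rabs (snd z).
Proof.
  unfold Cabs. rewrite <- (sqrt_Rsqr (Rabs (fst z) + Rabs (snd z))).
  2:{ pose proof (Rabs_pos (fst z)); pose proof (Rabs_pos (snd z)); lra. }
  apply sqrt_le_1_alt. unfold Rsqr.
  pose proof (Rabs_pos (fst z)); pose proof (Rabs_pos (snd z)).
  assert (E1 : fst z * fst z = Rabs (fst z) * Rabs (fst z)) by (rewrite <- Rabs_mult; rewrite Rabs_pos_eq; nra).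
  assert (E2 : snd z * snd z = Rabs (snd z) * Rabs (snd z)) by (rewrite <- Rabs_mult; rewrite Rabs_pos_eq; nra).
  rewrite E1, E2. nra.
Qed.
Lemma Cabs_pos z : 0 <= Cabs z.
Proof. unfold Cabs; apply sqrt_pos. Qed.
Lemma Cabs_sq z : Cabs z * Cabs z = fst z * fst z + snd z * snd z.
Proof. unfold Cabs. apply sqrt_sqrt. nra. Qed.
Lemma Cabs_RC r : Cabs (RC r) = Rabs r.
Proof. unfold Cabs, RC; simpl. rewrite Rmult_0_l, Rplus_0_r. apply sqrt_Rsqr_abs. Qed.
Lemma Cabs_C0 : Cabs C0 = 0.
Proof. unfold Cabs, C0; simpl. rewrite Rmult_0_l, Rplus_0_r. apply sqrt_0. Qed.
Lemma Cabs_mult z w : Cabs (Cmult z w) = Cabs z * Cabs w.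
Proof.
  unfold Cabs, Cmult; simpl. rewrite <- sqrt_mult by nra. f_equal. ring.
Qed.
Lemma Cabs_conj z : Cabs (Cconj z) = Cabs z.
Proof. unfold Cabs, Cconj; simpl. f_equal; ring. Qed.
Lemma Rabs_eq_0 r : Rabs r <= 0 -> r = 0.
Proof. intros H. destruct (Req_dec r 0); auto. exfalso. pose proof (Rabs_pos_lt r H0). lra. Qed.
Lemma Cabs_eq0 z : Cabs z = 0 -> z = C0.
Proof.
  intros H. pose proof (Cabs_ge_fst z); pose proof (Cabs_ge_snd z).
  rewrite H in *. apply Cx_eq; simpl; [apply (Rabs_eq_0 (fst z))|apply (Rabs_eq_0 (snd z))]; lra.
Qed.

Lemma Csum_fst {V} (f : V -> Cx) l : fst (Csum_list f l) = Rsum_list (fun x => fst (f x)) l.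
Proof. induction l; simpl; auto. rewrite IHl; auto. Qed.
Lemma Csum_snd {V} (f : V -> Cx) l : snd (Csum_list f l) = Rsum_list (fun x => snd (f x)) l.
Proof. induction l; simpl; auto. rewrite IHl; auto. Qed.

Lemma Csummable_iff {V} (f : V -> Cx) : Csummable f <-> RSummable (fun x => fst (f x)) /\ RSummable (fun x => snd (f x)).
Proof.
  split.
  - intros [M HM]. split; exists M; intros l Hl; eapply Rle_trans; [|apply (HM l Hl)| |apply (HM l Hl)];
      apply Rsum_le; intros; [apply Cabs_ge_fst|apply Cabs_ge_snd].
  - intros [[M1 H1] [M2 H2]]. exists (M1 + M2). intros l Hl.
    eapply Rle_trans; [apply (Rsum_le _ (fun x => Rabs (fst (f x)) + Rabs (snd (f x)))); intros; apply Cabs_le|].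
    rewrite Rsum_plus. specialize (H1 l Hl); specialize (H2 l Hl); lra.
Qed.

Lemma HasSumC_iff {V} (f : V -> Cx) s : HasSumC f s <->
  HasSumR (fun x => fst (f x)) (fst s) /\ HasSumR (fun x => snd (f x)) (snd s).
Proof.
  split.
  - intros [Hs Hc]. apply Csummable_iff in Hs. destruct Hs as [H1 H2].
    split; split; auto; intros eps He; destruct (Hc eps He) as [l0 H0]; exists l0; intros l Hl Hi;
      specialize (H0 l Hl Hi); eapply Rle_lt_trans; [|apply H0| |apply H0].
    + replace (Rsum_list (fun x => fst (f x)) l - fst s) with (fst (Cminus (Csum_list f l) s)).
      apply Cabs_ge_fst. unfold Cminus, Cplus, Copp; simpl; rewrite Csum_fst; ring.
    + replace (Rsum_list (fun x => snd (f x)) l - snd s) with (snd (Cminus (Csum_list f l) s)).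
      apply Cabs_ge_snd. unfold Cminus, Cplus, Copp; simpl; rewrite Csum_snd; ring.
  - intros [[S1 H1] [S2 H2]]. split; [apply Csummable_iff; auto|].
    intros eps He. destruct (H1 (eps/2)) as [l1 A]; [lra|]. destruct (H2 (eps/2)) as [l2 B]; [lra|].
    exists (l1 ++ l2). intros l Hl Hi.
    specialize (A l Hl (fun x h => Hi x (in_or_app _ _ _ (or_introl h)))).
    specialize (B l Hl (fun x h => Hi x (in_or_app _ _ _ (or_intror h)))).
    eapply Rle_lt_trans; [apply Cabs_le|].
    unfold Cminus, Cplus, Copp; simpl. rewrite Csum_fst, Csum_snd. fold (Rminus (Rsum_list (fun x => fst (f x)) l) (fst s)).
    fold (Rminus (Rsum_list (fun x => snd (f x)) l) (snd s)). lra.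
Qed.

Lemma sumC_eq {V} (f : V -> Cx) s : HasSumC f s -> sumC f = s.
Proof.
  intros H. unfold sumC. destruct (excluded_middle_informative _) as [E|E].
  - destruct (constructive_indefinite_description _ E) as [t Ht]; simpl.
    apply HasSumC_iff in H, Ht. destruct H, Ht.
    apply Cx_eq; eapply HasSumR_unique; eauto.
  - exfalso; apply E; exists s; auto.
Qed.

Lemma HasSumC_exists {V} (f : V -> Cx) : Csummable f -> HasSumC f (sumC f).
Proof.
  intros H. apply Csummable_iff in H. destruct H as [H1 H2].
  destruct (HasSumR_exists _ H1) as [a Ha]. destruct (HasSumR_exists _ H2) as [b Hb].
  assert (HasSumC f (a, b)) by (apply HasSumC_iff; auto).
  rewrite (sumC_eq _ _ H); auto.
Qed.

Lemma HasSumC_summable {V} (f : V -> Cx) s : HasSumC f s -> Csummable f.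
Proof. intros [H _]; auto. Qed.

Lemma HasSumC_ext {V} (f g : V -> Cx) s : (forall x, f x = g x) -> HasSumC f s -> HasSumC g s.
Proof. intros H. replace g with f; auto. apply functional_extensionality; auto. Qed.

Lemma HasSumC_plus {V} (f g : V -> Cx) a b : HasSumC f a -> HasSumC g b -> HasSumC (fun x => Cplus (f x) (g x)) (Cplus a b).
Proof.
  rewrite !HasSumC_iff. intros [A1 A2] [B1 B2]. split; simpl.
  - apply (HasSumR_plus _ _ _ _ A1 B1).
  - apply (HasSumR_plus _ _ _ _ A2 B2).
Qed.

Lemma HasSumC_scal {V} (k : Cx) (f : V -> Cx) a : HasSumC f a -> HasSumC (fun x => Cmult k (f x)) (Cmult k a).
Proof.
  rewrite !HasSumC_iff. intros [A1 A2]. split; simpl.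
  - apply HasSumR_minus; apply HasSumR_scal; auto.
  - apply HasSumR_plus; apply HasSumR_scal; auto.
Qed.

Lemma HasSumC_opp {V} (f : V -> Cx) a : HasSumC f a -> HasSumC (fun x => Copp (f x)) (Copp a).
Proof.
  intros H. apply (HasSumC_scal (RC (-1))) in H.
  replace (Copp a) with (Cmult (RC (-1)) a) by (unfold RC, Copp; ceq).
  eapply HasSumC_ext; [|apply H]. intros; unfold RC, Copp; ceq.
Qed.

Lemma HasSumC_minus {V} (f g : V -> Cx) a b : HasSumC f a -> HasSumC g b -> HasSumC (fun x => Cminus (f x) (g x)) (Cminus a b).
Proof. intros A B. apply HasSumC_plus; auto. apply HasSumC_opp; auto. Qed.

Lemma HasSumC_fin {V} (f : V -> Cx) l : NoDup l -> (forall x, ~ In x l -> f x = C0) -> HasSumC f (Csum_list f l).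
Proof.
  intros Hl Hz. apply HasSumC_iff. rewrite Csum_fst, Csum_snd. split; apply HasSumR_fin; auto;
  intros x Hx; rewrite (Hz x Hx); auto.
Qed.

Lemma HasSumC_zero {V} : HasSumC (fun _ : V => C0) C0.
Proof. apply (HasSumC_fin _ nil); [constructor|auto]. Qed.

Lemma sumC_zero {V} : sumC (fun _ : V => C0) = C0.
Proof. apply sumC_eq, HasSumC_zero. Qed.

Lemma Csummable_le {V} (f : V -> Cx) (g : V -> R) : (forall x, Cabs (f x) <= g x) -> RSummable g -> Csummable f.
Proof.
  intros H [M HM]. exists M. intros l Hl. eapply Rle_trans; [|apply (HM l Hl)].
  apply Rsum_le. intros x. eapply Rle_trans; [apply H|apply Rle_abs].
Qed.

Lemma RSummable_of_C {V} (f : V -> Cx) : Csummable f -> RSummable (fun x => Cabs (f x)).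
Proof.
  intros [M HM]. exists M. intros l Hl. eapply Rle_trans; [|apply (HM l Hl)].
  apply Rsum_le. intros x. rewrite Rabs_pos_eq; [lra|apply Cabs_pos].
Qed.

Lemma Csummable_RC {V} (g : V -> R) : Csummable (fun x => RC (g x)) <-> RSummable g.
Proof.
  split; intros [M HM]; exists M; intros l Hl; (eapply Rle_trans; [|apply (HM l Hl)]);
   apply Rsum_le; intros; rewrite Cabs_RC; lra.
Qed.

Lemma HasSumC_RC {V} (g : V -> R) s : HasSumR g s -> HasSumC (fun x => RC (g x)) (RC s).
Proof.
  intros H. apply HasSumC_iff; simpl. split; auto. apply HasSumR_zero.
Qed.

End L3.
Import L3.

Module L4.

Lemma sqrt_sq_eq x : 0 <= x -> sqrt x * sqrt x = x.
Proof. apply sqrt_sqrt. Qed.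

Lemma cs2 X Y a b : 0 <= X -> 0 <= Y -> sqrt X * sqrt Y + a * b <= sqrt (X + a * a) * sqrt (Y + b * b).
Proof.
  intros HX HY. rewrite <- (sqrt_mult (X + a * a)) by nra.
  set (L := sqrt X * sqrt Y + a * b).
  apply Rle_trans with (Rabs L); [apply Rle_abs|].
  rewrite <- sqrt_Rsqr_abs. apply sqrt_le_1_alt. unfold Rsqr, L.
  pose proof (sqrt_sq_eq X HX); pose proof (sqrt_sq_eq Y HY).
  pose proof (sqrt_pos X); pose proof (sqrt_pos Y).
  set (p := sqrt X) in *. set (q := sqrt Y) in *.
  rewrite <- H, <- H0. pose proof (Rle_0_sqr (p*b - a*q)); unfold Rsqr in *; nra.
Qed.

Lemma Rsum_CS {W} (x y : W -> R) l :
  Rsum_list (fun i => x i * y i) l <= sqrt (Rsum_list (fun i => x i * x i) l) * sqrt (Rsum_list (fun i => y i * y i) l).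
Proof.
  induction l as [|a l IH]; simpl.
  - rewrite sqrt_0; lra.
  - assert (0 <= Rsum_list (fun i => x i * x i) l) by (apply Rsum_nonneg; intros; nra).
    assert (0 <= Rsum_list (fun i => y i * y i) l) by (apply Rsum_nonneg; intros; nra).
    pose proof (cs2 _ _ (x a) (y a) H H0).
    rewrite (Rplus_comm (x a * x a)), (Rplus_comm (y a * y a)). lra.
Qed.

Lemma Rsum_mink {W} (x y : W -> R) l :
  Rsum_list (fun i => (x i + y i) * (x i + y i)) l <=
  (sqrt (Rsum_list (fun i => x i * x i) l) + sqrt (Rsum_list (fun i => y i * y i) l)) *
  (sqrt (Rsum_list (fun i => x i * x i) l) + sqrt (Rsum_list (fun i => y i * y i) l)).
Proof.
  rewrite (Rsum_ext _ (fun i => (x i * x i + y i * y i) + 2 * (x i * y i))) by (intros; ring).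
  rewrite Rsum_plus, Rsum_plus, Rsum_scal.
  pose proof (Rsum_CS x y l).
  assert (0 <= Rsum_list (fun i => x i * x i) l) by (apply Rsum_nonneg; intros; nra).
  assert (0 <= Rsum_list (fun i => y i * y i) l) by (apply Rsum_nonneg; intros; nra).
  rewrite <- (sqrt_sq_eq _ H0) at 1. rewrite <- (sqrt_sq_eq _ H1) at 1. nra.
Qed.

Lemma mink_sum {W} (x y h : W -> R) X Y :
  (forall i, 0 <= h i <= (x i + y i) * (x i + y i)) ->
  HasSumR (fun i => x i * x i) X -> HasSumR (fun i => y i * y i) Y ->
  exists H, HasSumR h H /\ sqrt H <= sqrt X + sqrt Y.
Proof.
  intros Hh HXs HYs.
  assert (HX0 : forall i, 0 <= x i * x i) by (intros; nra).
  assert (HY0 : forall i, 0 <= y i * y i) by (intros; nra).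
  assert (Hb : forall l, NoDup l -> Rsum_list h l <= (sqrt X + sqrt Y) * (sqrt X + sqrt Y)).
  { intros l Hl. eapply Rle_trans; [apply Rsum_le; intros i; apply (proj2 (Hh i))|].
    eapply Rle_trans; [apply Rsum_mink|].
    pose proof (HasSumR_partial_le _ _ HX0 HXs l Hl).
    pose proof (HasSumR_partial_le _ _ HY0 HYs l Hl).
    apply sqrt_le_1_alt in H, H0.
    pose proof (sqrt_pos (Rsum_list (fun i => x i * x i) l)).
    pose proof (sqrt_pos (Rsum_list (fun i => y i * y i) l)). nra. }
  destruct (HasSumR_nonneg_exists h) as [H HH].
  { intros i; apply Hh. }
  { exists ((sqrt X + sqrt Y) * (sqrt X + sqrt Y)). intros l Hl.
    rewrite (Rsum_ext _ h) by (intros i; apply Rabs_pos_eq, Hh). auto. }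
  exists H. split; auto.
  pose proof (HasSumR_bound _ _ _ HH Hb).
  apply sqrt_le_1_alt in H0. rewrite sqrt_square in H0; auto.
  pose proof (sqrt_pos X); pose proof (sqrt_pos Y); lra.
Qed.

Lemma cv_le (u : nat -> R) L M N : Un_cv u L -> (forall k, (N <= k)%nat -> u k <= M) -> L <= M.
Proof.
  intros Hc Hb. apply Rnot_lt_le. intro Hlt.
  destruct (Hc (L - M)) as [K HK]; [lra|].
  specialize (HK (max K N) (Nat.le_max_l _ _)). specialize (Hb (max K N) (Nat.le_max_r _ _)).
  unfold Rdist in HK. apply Rabs_def2 in HK. lra.
Qed.

Lemma cv_Rsum {W} (fk : nat -> W -> R) (f : W -> R) l :
  (forall i, Un_cv (fun k => fk k i) (f i)) -> Un_cv (fun k => Rsum_list (fk k) l) (Rsum_list f l).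
Proof.
  intros H. induction l as [|a l IH]; simpl.
  - intros eps He. exists O. intros; unfold Rdist; rewrite Rminus_0_r, Rabs_R0; auto.
  - apply CV_plus; auto.
Qed.

Lemma fatou {W} (fk : nat -> W -> R) (f : W -> R) M N :
  (forall i, 0 <= f i) -> (forall i, Un_cv (fun k => fk k i) (f i)) ->
  (forall k, (N <= k)%nat -> forall l, NoDup l -> Rsum_list (fk k) l <= M) ->
  exists s, HasSumR f s /\ s <= M.
Proof.
  intros Hf Hc Hb.
  assert (Hp : forall l, NoDup l -> Rsum_list f l <= M).
  { intros l Hl. apply (cv_le _ _ M N (cv_Rsum fk f l Hc)). intros k Hk; apply Hb; auto. }
  destruct (HasSumR_nonneg_exists f Hf) as [s Hs].
  { exists M; intros l Hl. rewrite (Rsum_ext _ f) by (intros; apply Rabs_pos_eq; auto). auto. }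
  exists s; split; auto. apply (HasSumR_bound _ _ _ Hs Hp).
Qed.

Lemma Cabs_triang z w : Cabs (Cplus z w) <= Cabs z + Cabs w.
Proof.
  pose proof (Cabs_pos z); pose proof (Cabs_pos w); pose proof (Cabs_pos (Cplus z w)).
  assert (Hsq : Cabs (Cplus z w) * Cabs (Cplus z w) <= (Cabs z + Cabs w) * (Cabs z + Cabs w)).
  { rewrite Cabs_sq. replace ((Cabs z + Cabs w) * (Cabs z + Cabs w)) with
    (Cabs z * Cabs z + Cabs w * Cabs w + 2 * (Cabs z * Cabs w)) by ring.
  rewrite !Cabs_sq. unfold Cplus; simpl.
  assert (fst z * fst w + snd z * snd w <= Cabs z * Cabs w).
  { unfold Cabs. rewrite <- sqrt_mult by nra.
    apply Rle_trans with (Rabs (fst z * fst w + snd z * snd w)); [apply Rle_abs|].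
    rewrite <- sqrt_Rsqr_abs. apply sqrt_le_1_alt. unfold Rsqr.
    pose proof (Rle_0_sqr (fst z * snd w - snd z * fst w)); unfold Rsqr in *; nra. }
  nra. }
  nra.
Qed.

Lemma Cabs_minus_sym z w : Cabs (Cminus z w) = Cabs (Cminus w z).
Proof. unfold Cabs, Cminus, Cplus, Copp; simpl. f_equal; ring. Qed.

Lemma Cabs_rev z w : Rabs (Cabs z - Cabs w) <= Cabs (Cminus z w).
Proof.
  apply Rabs_le. split.
  - pose proof (Cabs_triang (Cminus w z) z).
    replace (Cplus (Cminus w z) z) with w in H by ceq. rewrite Cabs_minus_sym in H. lra.
  - pose proof (Cabs_triang (Cminus z w) w).
    replace (Cplus (Cminus z w) w) with z in H by ceq. lra.
Qed.

End L4.
Import L4.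

Module L5.

Ltac ceq := apply Cx_eq; simpl; ring.

Lemma RSummable_restrict {A B} (e : A -> B) (g : B -> R) : Injective e -> RSummable g -> RSummable (fun a => g (e a)).
Proof.
  intros He [M HM]. exists M. intros l Hl.
  assert (Rsum_list (fun a => Rabs (g (e a))) l = Rsum_list (fun x => Rabs (g x)) (map e l)).
  { clear. induction l; simpl; auto. rewrite IHl; auto. }
  rewrite H. apply HM. apply Injective_map_NoDup; auto.
Qed.

Lemma HasSumR_sum3 {A B C} (g : A + (B + C) -> R) s1 s2 s3 :
  HasSumR (fun a => g (inl a)) s1 -> HasSumR (fun x => g (inr (inl x))) s2 -> HasSumR (fun x => g (inr (inr x))) s3 ->
  HasSumR g (s1 + s2 + s3).
Proof.
  intros H1 H2 H3.
  set (g1 := fun i : A + (B + C) => match i with inl a => g (inl a) | _ => 0 end).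
  set (g2 := fun i : A + (B + C) => match i with inr (inl a) => g (inr (inl a)) | _ => 0 end).
  set (g3 := fun i : A + (B + C) => match i with inr (inr a) => g (inr (inr a)) | _ => 0 end).
  assert (K1 : HasSumR g1 s1).
  { apply (HasSumR_inj (@inl A (B + C))); [intros a b' E; inversion E; auto| |auto].
    intros [a|[a|a]] Hn; simpl in Hn; try lra. exists a; auto. }
  assert (K2 : HasSumR g2 s2).
  { apply (HasSumR_inj (fun x : B => @inr A (B + C) (inl x))); [intros a b' E; inversion E; auto| |auto].
    intros [a|[a|a]] Hn; simpl in Hn; try lra. exists a; auto. }
  assert (K3 : HasSumR g3 s3).
  { apply (HasSumR_inj (fun x : C => @inr A (B + C) (inr x))); [intros a b' E; inversion E; auto| |auto].
    intros [a|[a|a]] Hn; simpl in Hn; try lra. exists a; auto. }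
  eapply HasSumR_ext; [|apply (HasSumR_plus _ _ _ _ (HasSumR_plus _ _ _ _ K1 K2) K3)].
  intros [a|[a|a]]; simpl; ring.
Qed.

Lemma HasSumR_list {A B} (F : A -> B -> R) (s : A -> R) l :
  (forall x, In x l -> HasSumR (F x) (s x)) -> HasSumR (fun p => Rsum_list (fun x => F x p) l) (Rsum_list s l).
Proof.
  induction l as [|a l IH]; intros H; simpl.
  - apply HasSumR_zero.
  - apply (HasSumR_plus (F a) (fun p => Rsum_list (fun x => F x p) l)); auto.
    apply H; left; auto. apply IH; intros; apply H; right; auto.
Qed.

Lemma Rsum_delta {A} (a : A) (F : A -> R) l : NoDup l ->
  Rsum_list (fun x => if Wdec a x then F x else 0) l = if in_dec Wdec a l then F a else 0.
Proof.
  induction 1; simpl; auto.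
  destruct (Wdec a x) as [<-|ne].
  - rewrite IHNoDup. destruct (in_dec Wdec a l); [contradiction|]. destruct (Wdec a a); [ring|congruence].
  - rewrite IHNoDup. destruct (Wdec x a); [congruence|]. destruct (in_dec Wdec a l); ring.
Qed.

Lemma Cmult_conj_self z : Cmult z (Cconj z) = RC (Cabs z * Cabs z).
Proof. rewrite Cabs_sq. unfold RC, Cconj, Cmult; apply Cx_eq; simpl; ring. Qed.

Lemma HasSumC_fin' {V} (f : V -> Cx) l s : NoDup l -> (forall x, ~ In x l -> f x = C0) -> Csum_list f l = s -> HasSumC f s.
Proof. intros H1 H2 <-. apply HasSumC_fin; auto. Qed.

Lemma RC_solve r z w : Cmult (RC r) z = w -> r <> 0 -> z = Cmult (RC (/ r)) w.
Proof. intros <- Hr. unfold RC; apply Cx_eq; simpl; field; auto. Qed.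

Lemma Cc_plus {V} (u v : V -> Cx) : Cc u -> Cc v -> Cc (fplus u v).
Proof. intros [l1 H1] [l2 H2]. exists (l1 ++ l2). intros x Hx. unfold fplus.
  rewrite H1, H2; [unfold C0; ceq| |]; intro; apply Hx; apply in_or_app; auto. Qed.
Lemma Cc_minus {V} (u v : V -> Cx) : Cc u -> Cc v -> Cc (fminus u v).
Proof. intros [l1 H1] [l2 H2]. exists (l1 ++ l2). intros x Hx. unfold fminus.
  rewrite H1, H2; [unfold C0, Cminus, Cplus, Copp; ceq| |]; intro; apply Hx; apply in_or_app; auto. Qed.
Lemma Cc_scal {V} a (u : V -> Cx) : Cc u -> Cc (fscal a u).
Proof. intros [l1 H1]. exists l1. intros x Hx. unfold fscal. rewrite H1; auto. unfold C0, Cmult; ceq. Qed.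

Section Graph.
Context {V : Type} (m : V -> R) (b : V -> V -> R) (c : V -> R).
Hypothesis Hm : is_measure m.
Hypothesis Hg : is_graph b c.

Lemma c_nn x : 0 <= c x. Proof. apply Hg. Qed.
Lemma b_nn x y : 0 <= b x y. Proof. apply Hg. Qed.
Lemma b_diag x : b x x = 0. Proof. apply Hg. Qed.
Lemma b_sym x y : b x y = b y x. Proof. apply Hg. Qed.
Lemma m_pos x : 0 < m x. Proof. apply Hm. Qed.

Definition deg (x : V) : R := fst (sumC (fun y => RC (b x y))).
Lemma deg_sum x : HasSumR (fun y => b x y) (deg x).
Proof.
  destruct Hg as (_ & _ & _ & _ & H). pose proof (HasSumC_exists _ (H x)) as K.
  apply HasSumC_iff in K. destruct K as [K _]. exact K.
Qed.
Lemma deg_nn x : 0 <= deg x.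
Proof. apply (HasSumR_ge0 _ _ (b_nn x) (deg_sum x)). Qed.

Definition delta (x : V) : V -> Cx := fun y => if Wdec x y then RC 1 else C0.

Lemma Cc_delta x : Cc (delta x).
Proof. exists (x :: nil). intros y Hy. unfold delta. destruct (Wdec x y); auto. subst; exfalso; apply Hy; left; auto. Qed.

Lemma L_formula u x S : HasSumC (fun y => Cmult (RC (b x y)) (u y)) S ->
  Cmult (RC (m x)) (Ltilde m b c u x) = Cminus (Cmult (u x) (RC (deg x + c x))) S.
Proof.
  intros HS.
  assert (E : sumC (fun y => Cmult (RC (b x y)) (Cminus (u x) (u y))) = Cminus (Cmult (u x) (RC (deg x))) S).
  { apply sumC_eq. eapply HasSumC_ext; [|apply (HasSumC_minus _ _ _ _ (HasSumC_scal (u x) _ _ (HasSumC_RC _ _ (deg_sum x))) HS)].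
    intros y; unfold RC; ceq. }
  unfold Ltilde. rewrite E. pose proof (m_pos x). unfold RC; apply Cx_eq; simpl; field; lra.
Qed.

Lemma L_delta_ne y x : y <> x -> Ltilde m b c (delta x) y = RC (- b y x / m y).
Proof.
  intros ne.
  assert (HS : HasSumC (fun z => Cmult (RC (b y z)) (delta x z)) (RC (b y x))).
  { apply (HasSumC_fin' _ (x :: nil)).
    - constructor; [simpl; tauto| constructor].
    - intros z Hz. unfold delta. destruct (Wdec x z). subst; exfalso; apply Hz; left; auto. unfold C0, RC; ceq.
    - simpl; unfold delta; destruct (Wdec x x); [|congruence]; unfold RC, C0; ceq. }
  pose proof (L_formula (delta x) y _ HS). pose proof (m_pos y).
  assert (delta x y = C0) by (unfold delta; destruct (Wdec x y); [congruence|auto]).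
  rewrite H1 in H. apply RC_solve in H; [|lra]. rewrite H.
  unfold RC, C0; apply Cx_eq; simpl; field; lra.
Qed.

Lemma HS_bdelta y x : HasSumC (fun z => Cmult (RC (b y z)) (delta x z)) (RC (b y x)).
Proof.
  apply (HasSumC_fin' _ (x :: nil)).
  - constructor; [simpl; tauto| constructor].
  - intros z Hz. unfold delta. destruct (Wdec x z). subst; exfalso; apply Hz; left; auto. unfold C0, RC; ceq.
  - simpl; unfold delta; destruct (Wdec x x); [|congruence]; unfold RC, C0; ceq.
Qed.

Lemma L_delta_eq x : Ltilde m b c (delta x) x = RC ((deg x + c x) / m x).
Proof.
  pose proof (L_formula (delta x) x _ (HS_bdelta x x)). pose proof (m_pos x).
  apply RC_solve in H; [|lra]. rewrite H. rewrite b_diag.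
  unfold delta; destruct (Wdec x x); [|congruence].
  unfold RC, C0; apply Cx_eq; simpl; field; lra.
Qed.

Definition Idx := ((V * V) + (V + V))%type.
Definition om (i : Idx) : R :=
  match i with inl p => b (fst p) (snd p) / 2 | inr (inl x) => c x | inr (inr x) => m x end.
Definition Tw (w : V -> Cx) (i : Idx) : Cx :=
  match i with inl p => Cminus (w (fst p)) (w (snd p)) | inr (inl x) => w x | inr (inr x) => w x end.
Definition qd (w : V -> Cx) (i : Idx) : R := om i * (Cabs (Tw w i) * Cabs (Tw w i)).

Lemma om_nn i : 0 <= om i.
Proof. destruct i as [p|[x|x]]; simpl; [pose proof (b_nn (fst p) (snd p)); lra| apply c_nn| pose proof (m_pos x); lra]. Qed.
Lemma qd_nn w i : 0 <= qd w i.
Proof. unfold qd. pose proof (om_nn i). pose proof (Cabs_pos (Tw w i)). nra. Qed.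

Definition Aw (w : V -> Cx) (p : V * V) : R :=
  b (fst p) (snd p) * Cabs (Cminus (w (fst p)) (w (snd p))) * Cabs (Cminus (w (fst p)) (w (snd p))).
Definition Bw (w : V -> Cx) (x : V) : R := c x * Cabs (w x) * Cabs (w x).
Definition Mw (w : V -> Cx) (x : V) : R := Cabs (w x) * Cabs (w x) * m x.

Lemma qd_sum w a b' c' : HasSumR (Aw w) a -> HasSumR (Bw w) b' -> HasSumR (Mw w) c' ->
  HasSumR (qd w) (a / 2 + b' + c').
Proof.
  intros HA HB HM. apply HasSumR_sum3.
  - replace (a / 2) with (/2 * a) by field.
    eapply HasSumR_ext; [|apply (HasSumR_scal (/2) _ _ HA)]. intros p; unfold qd, Aw; simpl. field.
  - eapply HasSumR_ext; [|apply HB]. intros p; unfold qd, Bw; simpl. ring.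
  - eapply HasSumR_ext; [|apply HM]. intros p; unfold qd, Mw; simpl. ring.
Qed.

Lemma DQN_parts w : DQN m b c w <-> RSummable (Aw w) /\ RSummable (Bw w) /\ RSummable (Mw w).
Proof.
  unfold DQN, l2. rewrite !Csummable_RC. unfold Aw, Bw, Mw. tauto.
Qed.

Lemma DQN_qd w : DQN m b c w <-> RSummable (qd w).
Proof.
  rewrite DQN_parts. split.
  - intros (A & B & M).
    destruct (HasSumR_exists _ A) as [a Ha]. destruct (HasSumR_exists _ B) as [b' Hb].
    destruct (HasSumR_exists _ M) as [c' Hc].
    eapply HasSumR_summable, qd_sum; eauto.
  - intros H. split; [|split].
    + apply (RSummable_restrict (@inl (V * V) (V + V))) in H; [|intros a a' E; inversion E; auto].
      apply (RSummable_scal 2) in H. eapply RSummable_le; [|apply H].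
      intros p; unfold qd, Aw; simpl. right; f_equal; field.
    + apply (RSummable_restrict (fun x : V => @inr (V * V) (V + V) (inl x))) in H; [|intros a a' E; inversion E; auto].
      eapply RSummable_le; [|apply H]. intros p; unfold qd, Bw; simpl. right; f_equal; ring.
    + apply (RSummable_restrict (fun x : V => @inr (V * V) (V + V) (inr x))) in H; [|intros a a' E; inversion E; auto].
      eapply RSummable_le; [|apply H]. intros p; unfold qd, Mw; simpl. right; f_equal; ring.
Qed.

Lemma ReQN w a b' : HasSumR (Aw w) a -> HasSumR (Bw w) b' -> Re (QN b c w w) = a / 2 + b'.
Proof.
  intros HA HB. unfold QN.
  rewrite (sumC_eq _ (RC a)).
  2:{ eapply HasSumC_ext; [|apply (HasSumC_RC _ _ HA)]. intros p. rewrite Cmult_conj_self. unfold Aw, RC; ceq. }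
  rewrite (sumC_eq _ (RC b')).
  2:{ eapply HasSumC_ext; [|apply (HasSumC_RC _ _ HB)]. intros p. rewrite Cmult_conj_self. unfold Bw, RC; ceq. }
  unfold Re, RC; simpl. field.
Qed.

Lemma Reip w c' : HasSumR (Mw w) c' -> Re (ip m w w) = c'.
Proof.
  intros HM. unfold ip. rewrite (sumC_eq _ (RC c')); [unfold Re, RC; auto|].
  eapply HasSumC_ext; [|apply (HasSumC_RC _ _ HM)]. intros p. rewrite Cmult_conj_self. unfold Mw, RC; ceq.
Qed.

Lemma fnN w s : HasSumR (qd w) s -> formnorm m (QN b c) w = sqrt s.
Proof.
  intros H. assert (K : DQN m b c w) by (apply DQN_qd; eapply HasSumR_summable; eauto).
  apply DQN_parts in K. destruct K as (A & B & M).
  destruct (HasSumR_exists _ A) as [a Ha]. destruct (HasSumR_exists _ B) as [b' Hb].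
  destruct (HasSumR_exists _ M) as [c' Hc].
  rewrite (HasSumR_unique _ _ _ H (qd_sum _ _ _ _ Ha Hb Hc)).
  unfold formnorm. rewrite (ReQN _ _ _ Ha Hb), (Reip _ _ Hc). auto.
Qed.

Lemma N_tri u v w su sv : (forall i, Cabs (Tw w i) <= Cabs (Tw u i) + Cabs (Tw v i)) ->
  HasSumR (qd u) su -> HasSumR (qd v) sv -> exists s, HasSumR (qd w) s /\ sqrt s <= sqrt su + sqrt sv.
Proof.
  intros Hw Hu Hv.
  apply (mink_sum (fun i => sqrt (om i) * Cabs (Tw u i)) (fun i => sqrt (om i) * Cabs (Tw v i))).
  - intros i. split; [apply qd_nn|]. unfold qd.
    pose proof (sqrt_sq_eq _ (om_nn i)). pose proof (sqrt_pos (om i)).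
    pose proof (Hw i). pose proof (Cabs_pos (Tw w i)). pose proof (om_nn i).
    replace ((sqrt (om i) * Cabs (Tw u i) + sqrt (om i) * Cabs (Tw v i)) *
             (sqrt (om i) * Cabs (Tw u i) + sqrt (om i) * Cabs (Tw v i))) with
      (om i * ((Cabs (Tw u i) + Cabs (Tw v i)) * (Cabs (Tw u i) + Cabs (Tw v i)))).
    2:{ set (so := sqrt (om i)) in *. rewrite <- H. ring. }
    apply Rmult_le_compat_l; auto. apply Rmult_le_compat; auto.
  - eapply HasSumR_ext; [|apply Hu]. intros i; unfold qd. rewrite <- (sqrt_sq_eq _ (om_nn i)) at 1. ring.
  - eapply HasSumR_ext; [|apply Hv]. intros i; unfold qd. rewrite <- (sqrt_sq_eq _ (om_nn i)) at 1. ring.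
Qed.

Lemma Cabs_minus_le z w : Cabs (Cminus z w) <= Cabs z + Cabs w.
Proof.
  eapply Rle_trans; [apply Cabs_triang|]. unfold Copp.
  replace (Cabs (- fst w, - snd w)) with (Cabs w); [lra|]. unfold Cabs; simpl; f_equal; ring.
Qed.

Lemma Tw_plus u v i : Tw (fplus u v) i = Cplus (Tw u i) (Tw v i).
Proof. destruct i as [p|[x|x]]; simpl; unfold fplus; auto. unfold Cminus, Cplus, Copp; ceq. Qed.
Lemma Tw_minus u v i : Tw (fminus u v) i = Cminus (Tw u i) (Tw v i).
Proof. destruct i as [p|[x|x]]; simpl; unfold fminus; auto. unfold Cminus, Cplus, Copp; ceq. Qed.
Lemma Tw_scal a u i : Tw (fscal a u) i = Cmult a (Tw u i).
Proof. destruct i as [p|[x|x]]; simpl; unfold fscal; auto. unfold Cminus, Cplus, Copp, Cmult; ceq. Qed.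

Lemma N_plus u v su sv : HasSumR (qd u) su -> HasSumR (qd v) sv ->
  exists s, HasSumR (qd (fplus u v)) s /\ sqrt s <= sqrt su + sqrt sv.
Proof. apply N_tri. intros i; rewrite Tw_plus; apply Cabs_triang. Qed.
Lemma N_minus u v su sv : HasSumR (qd u) su -> HasSumR (qd v) sv ->
  exists s, HasSumR (qd (fminus u v)) s /\ sqrt s <= sqrt su + sqrt sv.
Proof. apply N_tri. intros i; rewrite Tw_minus; apply Cabs_minus_le. Qed.
Lemma N_scal a u su : HasSumR (qd u) su -> HasSumR (qd (fscal a u)) (Cabs a * Cabs a * su).
Proof.
  intros H. eapply HasSumR_ext; [|apply (HasSumR_scal (Cabs a * Cabs a) _ _ H)].
  intros i; unfold qd. rewrite Tw_scal, Cabs_mult. ring.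
Qed.

Lemma Cabs_Cminus_C0 z : Cabs (Cminus z C0) = Cabs z.
Proof. unfold Cabs, Cminus, Cplus, Copp, C0; simpl. f_equal; ring. Qed.
Lemma Cabs_C0_Cminus z : Cabs (Cminus C0 z) = Cabs z.
Proof. unfold Cabs, Cminus, Cplus, Copp, C0; simpl. f_equal; ring. Qed.
Lemma Cminus_self z : Cminus z z = C0.
Proof. unfold Cminus, Cplus, Copp, C0; ceq. Qed.

Lemma qd_delta x : exists s, HasSumR (qd (delta x)) s.
Proof.
  assert (H : DQN m b c (delta x)).
  { apply DQN_parts. split; [|split].
    - set (rf := fun p : V * V => if Wdec (fst p) x then b x (snd p) else 0).
      assert (K : HasSumR (fun p => rf p + rf (snd p, fst p)) (deg x + deg x)).
      { apply HasSumR_plus; [apply HasSumR_row, deg_sum|].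
        apply (HasSumR_swap rf). apply HasSumR_row, deg_sum. }
      eapply RSummable_le; [|apply (HasSumR_summable _ _ K)].
      intros [p1 p2]. unfold Aw, rf, delta; simpl.
      assert (Hr : forall z, Cabs (RC z) * Cabs (RC z) = z * z) by (intros; rewrite Cabs_RC; rewrite <- Rabs_mult; apply Rabs_pos_eq; nra).
      assert (E1 : Cminus (RC 1) (RC 1) = RC 0) by (unfold RC, Cminus, Cplus, Copp; ceq).
      assert (E2 : Cminus (RC 1) C0 = RC 1) by (unfold RC, C0, Cminus, Cplus, Copp; ceq).
      assert (E3 : Cminus C0 (RC 1) = RC (-1)) by (unfold RC, C0, Cminus, Cplus, Copp; ceq).
      assert (E4 : Cminus C0 C0 = RC 0) by (unfold RC, C0, Cminus, Cplus, Copp; ceq).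
      assert (Hr' : forall y z, y * Cabs (RC z) * Cabs (RC z) = y * (z * z)) by (intros; rewrite Rmult_assoc, Hr; auto).
      assert (AM : forall X Y, 0 <= X -> X <= Y -> Rabs X <= Rabs Y).
      { intros X Y H1 H2. rewrite !Rabs_pos_eq; lra. }
      pose proof (b_nn p1 p2) as B1; pose proof (b_nn p2 p1) as B2; pose proof (b_nn x p1) as B3; pose proof (b_nn x p2) as B4.
      destruct (Wdec x p1) as [e1|n1]; destruct (Wdec x p2) as [e2|n2];
        destruct (Wdec p1 x) as [f1|g1]; destruct (Wdec p2 x) as [f2|g2];
        try (exfalso; congruence); rewrite ?E1, ?E2, ?E3, ?E4, ?Hr'; apply AM.
      all: subst; rewrite ?b_diag; try nra.
      all: try (rewrite b_sym; nra).
    - apply HasSumR_summable with (s := Rsum_list (Bw (delta x)) (x :: nil)). apply HasSumR_fin.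
      constructor; [simpl; tauto|constructor].
      intros y Hy. unfold Bw, delta. destruct (Wdec x y); [subst; exfalso; apply Hy; left; auto|]. rewrite Cabs_C0; ring.
    - apply HasSumR_summable with (s := Rsum_list (Mw (delta x)) (x :: nil)). apply HasSumR_fin.
      constructor; [simpl; tauto|constructor].
      intros y Hy. unfold Mw, delta. destruct (Wdec x y); [subst; exfalso; apply Hy; left; auto|]. rewrite Cabs_C0; ring. }
  apply DQN_qd in H. apply HasSumR_exists; auto.
Qed.

Definition zerof : V -> Cx := fun _ => C0.
Lemma qd_zero : HasSumR (qd zerof) 0.
Proof.
  eapply HasSumR_ext; [|apply HasSumR_zero]. intros i. unfold qd, zerof.
  destruct i as [p|[y|y]]; simpl; rewrite ?Cminus_self, Cabs_C0; ring.
Qed.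

Definition cexp (phi : V -> Cx) (l : list V) : V -> Cx :=
  fun z => Csum_list (fun y => Cmult (phi y) (delta y z)) l.

Lemma cexp_nil phi : cexp phi nil = zerof.
Proof. reflexivity. Qed.
Lemma cexp_cons phi a l : cexp phi (a :: l) = fplus (fscal (phi a) (delta a)) (cexp phi l).
Proof. reflexivity. Qed.

Lemma cexp_val phi l z : NoDup l -> cexp phi l z = if in_dec Wdec z l then phi z else C0.
Proof.
  induction 1; unfold cexp in *; simpl; auto.
  rewrite IHNoDup. unfold delta. destruct (Wdec x z) as [<-|ne].
  - destruct (in_dec Wdec x l); [contradiction|]. destruct (Wdec x x); [|congruence]. unfold RC, C0; ceq.
  - destruct (Wdec x z); [congruence|]. destruct (in_dec Wdec z l); unfold C0; ceq.
Qed.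

Lemma Cc_cexp phi : Cc phi -> exists l, NoDup l /\ (forall x, ~ In x l -> phi x = C0) /\ phi = cexp phi l.
Proof.
  intros [l0 H]. exists (nodup Wdec l0). split; [apply NoDup_nodup|]. split.
  - intros x Hx; apply H. intro; apply Hx; apply nodup_In; auto.
  - apply functional_extensionality; intros z. rewrite cexp_val by apply NoDup_nodup.
    destruct (in_dec Wdec z (nodup Wdec l0)) as [i|n]; auto. apply H. intro; apply n; apply nodup_In; auto.
Qed.

Lemma qd_cexp phi l : exists s, HasSumR (qd (cexp phi l)) s.
Proof.
  induction l as [|a l IH].
  - exists 0; apply qd_zero.
  - rewrite cexp_cons. destruct IH as [s Hs]. destruct (qd_delta a) as [t Ht].
    destruct (N_plus _ _ _ _ (N_scal (phi a) _ _ Ht) Hs) as [r [Hr _]]. exists r; auto.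
Qed.

Lemma qd_Cc phi : Cc phi -> exists s, HasSumR (qd phi) s.
Proof. intros H. destruct (Cc_cexp phi H) as [l [_ [_ E]]]. rewrite E. apply qd_cexp. Qed.

Lemma Cc_DQN phi : Cc phi -> DQN m b c phi.
Proof. intros H. apply DQN_qd. destruct (qd_Cc phi H) as [s Hs]. eapply HasSumR_summable; eauto. Qed.
End Graph.

End L5.
Import L5.

Module L6.

Ltac ceq := apply Cx_eq; simpl; ring.

Lemma HasSumC_conj {V} (f : V -> Cx) s : HasSumC f s -> HasSumC (fun x => Cconj (f x)) (Cconj s).
Proof.
  rewrite !HasSumC_iff. intros [A B]; split; simpl; auto.
  apply (HasSumR_scal (-1)) in B. eapply HasSumR_ext; [|replace (- snd s) with (-1 * snd s) by ring; apply B].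
  intros; simpl; ring.
Qed.

Lemma l2_RS {V} (m : V -> R) w : l2 m w -> RSummable (Mw m w).
Proof. unfold l2. rewrite Csummable_RC. auto. Qed.

Section Forms.
Context {V : Type} (m : V -> R) (b : V -> V -> R) (c : V -> R).
Hypothesis Hm : is_measure m.
Hypothesis Hg : is_graph b c.
Context (D : (V -> Cx) -> Prop) (Q : (V -> Cx) -> (V -> Cx) -> Cx).
Hypothesis Hsym : sym_form m D Q.
Hypothesis HC : condC m b c D Q.

Lemma D_l2 u : D u -> l2 m u. Proof. apply Hsym. Qed.
Lemma D_zero : D zerof. Proof. apply Hsym. Qed.
Lemma D_plus u v : D u -> D v -> D (fplus u v). Proof. apply Hsym. Qed.
Lemma D_scal a u : D u -> D (fscal a u). Proof. apply Hsym. Qed.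
Lemma fminus_eq (u v : V -> Cx) : fminus u v = fplus u (fscal (RC (-1)) v).
Proof. apply functional_extensionality; intros x. unfold fminus, fplus, fscal, Cminus, Copp, RC; ceq. Qed.
Lemma D_minus u v : D u -> D v -> D (fminus u v).
Proof. intros. rewrite fminus_eq. apply D_plus; auto. apply D_scal; auto. Qed.
Lemma D_Cc u : Cc u -> D u. Proof. apply HC. Qed.
Lemma Q_plus u v w : D u -> D v -> D w -> Q (fplus u v) w = Cplus (Q u w) (Q v w). Proof. apply Hsym. Qed.
Lemma Q_scal a u v : D u -> D v -> Q (fscal a u) v = Cmult a (Q u v). Proof. apply Hsym. Qed.
Lemma Q_herm u v : D u -> D v -> Q v u = Cconj (Q u v). Proof. apply Hsym. Qed.
Lemma Q_nn u : D u -> 0 <= Re (Q u u). Proof. apply HC. Qed.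

Lemma ip_summable u v : l2 m u -> l2 m v -> Csummable (fun x => Cmult (Cmult (u x) (Cconj (v x))) (RC (m x))).
Proof.
  intros Hu Hv. apply l2_RS in Hu, Hv.
  apply (Csummable_le _ (fun x => Mw m u x + Mw m v x)); [|apply RSummable_plus; auto].
  intros x. rewrite !Cabs_mult, Cabs_conj, Cabs_RC. unfold Mw.
  pose proof (Hm x). rewrite Rabs_pos_eq by lra.
  pose proof (Cabs_pos (u x)); pose proof (Cabs_pos (v x)).
  pose proof (Rle_0_sqr (Cabs (u x) - Cabs (v x))). unfold Rsqr in *. nra.
Qed.

Lemma ip_has u v : l2 m u -> l2 m v -> HasSumC (fun x => Cmult (Cmult (u x) (Cconj (v x))) (RC (m x))) (ip m u v).
Proof. intros. apply HasSumC_exists, ip_summable; auto. Qed.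

Lemma ip_plus u v w : l2 m u -> l2 m v -> l2 m w -> ip m (fplus u v) w = Cplus (ip m u w) (ip m v w).
Proof.
  intros Hu Hv Hw. unfold ip at 1. apply sumC_eq.
  eapply HasSumC_ext; [|apply (HasSumC_plus _ _ _ _ (ip_has u w Hu Hw) (ip_has v w Hv Hw))].
  intros x; unfold fplus, Cplus, Cmult, Cconj; ceq.
Qed.

Lemma ip_scal a u w : l2 m u -> l2 m w -> ip m (fscal a u) w = Cmult a (ip m u w).
Proof.
  intros Hu Hw. unfold ip at 1. apply sumC_eq.
  eapply HasSumC_ext; [|apply (HasSumC_scal a _ _ (ip_has u w Hu Hw))].
  intros x; unfold fscal, Cmult, Cconj; ceq.
Qed.

Lemma ip_herm u v : l2 m u -> l2 m v -> ip m v u = Cconj (ip m u v).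
Proof.
  intros Hu Hv. unfold ip at 1. apply sumC_eq.
  eapply HasSumC_ext; [|apply (HasSumC_conj _ _ (ip_has u v Hu Hv))].
  intros x; unfold Cmult, Cconj, RC; ceq.
Qed.

Lemma ip_self u : l2 m u -> exists s, HasSumR (Mw m u) s /\ Re (ip m u u) = s.
Proof.
  intros Hu. destruct (HasSumR_exists _ (l2_RS _ _ Hu)) as [s Hs]. exists s; split; auto.
  apply Reip; auto.
Qed.

Lemma Mw_nn u x : 0 <= Mw m u x.
Proof. unfold Mw. pose proof (Hm x). pose proof (Cabs_pos (u x)). nra. Qed.

Lemma ip_point u x : l2 m u -> Cabs (u x) * Cabs (u x) * m x <= Re (ip m u u).
Proof.
  intros Hu. destruct (ip_self u Hu) as [s [Hs ->]].
  apply (HasSumR_point (Mw m u) s x (Mw_nn u) Hs).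
Qed.

Lemma ip_nn u : l2 m u -> 0 <= Re (ip m u u).
Proof. intros Hu. destruct (ip_self u Hu) as [s [Hs ->]]. apply (HasSumR_ge0 _ _ (Mw_nn u) Hs). Qed.

Definition P := ipQ m Q.
Definition nQ (w : V -> Cx) := formnorm m Q w.

Lemma nQ_P w : nQ w = sqrt (Re (P w w)).
Proof. reflexivity. Qed.

Lemma P_plus u v w : D u -> D v -> D w -> P (fplus u v) w = Cplus (P u w) (P v w).
Proof.
  intros. unfold P, ipQ. rewrite Q_plus, ip_plus; auto using D_l2. unfold Cplus; ceq.
Qed.
Lemma P_scal a u w : D u -> D w -> P (fscal a u) w = Cmult a (P u w).
Proof.
  intros. unfold P, ipQ. rewrite Q_scal, ip_scal; auto using D_l2. unfold Cplus, Cmult; ceq.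
Qed.
Lemma P_herm u v : D u -> D v -> P v u = Cconj (P u v).
Proof.
  intros. unfold P, ipQ. rewrite (Q_herm u v), (ip_herm u v); auto using D_l2. unfold Cplus, Cconj; ceq.
Qed.
Lemma P_nn u : D u -> 0 <= Re (P u u).
Proof. intros. unfold P, ipQ, Re, Cplus; simpl. pose proof (Q_nn u H). pose proof (ip_nn u (D_l2 u H)). unfold Re in *; lra. Qed.

Lemma P_plus_r u v w : D u -> D v -> D w -> P u (fplus v w) = Cplus (P u v) (P u w).
Proof.
  intros. rewrite P_herm by auto using D_plus. rewrite P_plus by auto.
  rewrite (P_herm u v), (P_herm u w) by auto. unfold Cconj, Cplus; ceq.
Qed.
Lemma P_scal_r a u w : D u -> D w -> P u (fscal a w) = Cmult (Cconj a) (P u w).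
Proof.
  intros. rewrite P_herm by auto using D_scal. rewrite P_scal by auto.
  rewrite (P_herm u w) by auto. unfold Cconj, Cmult; ceq.
Qed.

Lemma P_point u x : D u -> Cabs (u x) * Cabs (u x) * m x <= Re (P u u).
Proof.
  intros. unfold P, ipQ, Re, Cplus; simpl. pose proof (Q_nn u H). pose proof (ip_point u x (D_l2 u H)). unfold Re in *; lra.
Qed.

Lemma ReP_plus u v : D u -> D v -> Re (P (fplus u v) (fplus u v)) = Re (P u u) + Re (P v v) + 2 * Re (P u v).
Proof.
  intros. rewrite P_plus by auto using D_plus. rewrite !P_plus_r by auto.
  rewrite (P_herm u v) by auto. unfold Re, Cplus, Cconj; simpl. ring.
Qed.
Lemma ReP_scal a u : D u -> Re (P (fscal a u) (fscal a u)) = Cabs a * Cabs a * Re (P u u).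
Proof.
  intros. rewrite P_scal by auto using D_scal. rewrite P_scal_r by auto. rewrite Cabs_sq.
  assert (Hi : snd (P u u) = 0).
  { pose proof (P_herm u u H H). destruct (P u u) as [p1 p2]. unfold Cconj in H0; simpl in H0.
    inversion H0. simpl. lra. }
  destruct (P u u) as [p1 p2]. simpl in Hi. subst p2. unfold Re, Cmult, Cconj; simpl. ring.
Qed.
Lemma ReP_minus u v : D u -> D v -> Re (P (fminus u v) (fminus u v)) = Re (P u u) + Re (P v v) - 2 * Re (P u v).
Proof.
  intros. rewrite fminus_eq. rewrite ReP_plus by auto using D_scal. rewrite ReP_scal by auto.
  rewrite P_scal_r by auto. rewrite Cabs_RC. rewrite (Rabs_left (-1)) by lra. unfold Re, Cmult, Cconj, RC; simpl. ring.
Qed.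

Lemma quad_lemma A B C : 0 <= A -> 0 <= C -> (forall t, 0 <= A - 2 * t * B + t * t * C) -> B * B <= A * C.
Proof.
  intros HA0 HC0 H. destruct (Req_dec C 0) as [E|E].
  - subst. destruct (Req_dec B 0) as [->|NB]; [lra|].
    specialize (H ((A + 1) / (2 * B))). exfalso.
    replace (A - 2 * ((A + 1) / (2 * B)) * B + (A + 1) / (2 * B) * ((A + 1) / (2 * B)) * 0) with (-1) in H by (field; auto). lra.
  - specialize (H (B / C)).
    replace (A - 2 * (B / C) * B + B / C * (B / C) * C) with (A - B * B / C) in H by (field; auto).
    assert (0 < C) by lra.
    assert (B * B / C <= A) by lra.
    apply (Rmult_le_compat_r C) in H1; [|lra]. unfold Rdiv in H1.
    rewrite Rmult_assoc, Rinv_l in H1 by auto. lra.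
Qed.

Lemma P_CS u v : D u -> D v -> Rabs (Re (P u v)) <= nQ u * nQ v.
Proof.
  intros Hu Hv. rewrite !nQ_P.
  assert (K : Re (P u v) * Re (P u v) <= Re (P u u) * Re (P v v)).
  { apply quad_lemma; try apply P_nn; auto.
    intros t. pose proof (P_nn _ (D_minus u (fscal (RC t) v) Hu (D_scal _ _ Hv))).
    rewrite ReP_minus in H by auto using D_scal. rewrite ReP_scal in H by auto.
    rewrite P_scal_r in H by auto. rewrite Cabs_RC in H.
    replace (Rabs t * Rabs t) with (t * t) in H by (rewrite <- Rabs_mult; rewrite Rabs_pos_eq; nra).
    unfold Re, Cmult, Cconj, RC in *; simpl in *. lra. }
  rewrite <- sqrt_mult by (apply P_nn; auto).
  rewrite <- sqrt_Rsqr_abs. apply sqrt_le_1_alt. unfold Rsqr. auto.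
Qed.

Lemma nQ_nn w : 0 <= nQ w. Proof. apply sqrt_pos. Qed.
Lemma nQ_sq w : D w -> nQ w * nQ w = Re (P w w).
Proof. intros. rewrite nQ_P. apply sqrt_sqrt, P_nn; auto. Qed.

Lemma abs_le_both x y : Rabs x <= y -> - y <= x <= y.
Proof. intros H. pose proof (Rle_abs x). pose proof (Rle_abs (-x)). rewrite Rabs_Ropp in H1. lra. Qed.

Lemma sqrt_le_of_sq x y : 0 <= y -> x <= y * y -> sqrt x <= y.
Proof. intros Hy H. rewrite <- (sqrt_square y Hy). apply sqrt_le_1_alt; auto. Qed.

Lemma nQ_plus u v : D u -> D v -> nQ (fplus u v) <= nQ u + nQ v.
Proof.
  intros Hu Hv. rewrite (nQ_P (fplus u v)). apply sqrt_le_of_sq; [pose proof (nQ_nn u); pose proof (nQ_nn v); lra|].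
  rewrite ReP_plus by auto. pose proof (P_CS u v Hu Hv). apply abs_le_both in H.
  rewrite <- (nQ_sq u), <- (nQ_sq v) by auto. nra.
Qed.
Lemma nQ_minus u v : D u -> D v -> nQ (fminus u v) <= nQ u + nQ v.
Proof.
  intros Hu Hv. rewrite (nQ_P (fminus u v)). apply sqrt_le_of_sq; [pose proof (nQ_nn u); pose proof (nQ_nn v); lra|].
  rewrite ReP_minus by auto. pose proof (P_CS u v Hu Hv). apply abs_le_both in H.
  rewrite <- (nQ_sq u), <- (nQ_sq v) by auto. nra.
Qed.
Lemma nQ_scal a u : D u -> nQ (fscal a u) = Cabs a * nQ u.
Proof.
  intros Hu. rewrite !nQ_P, ReP_scal by auto. rewrite sqrt_mult by (try apply P_nn; auto; pose proof (Cabs_pos a); nra).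
  rewrite sqrt_square; auto. apply Cabs_pos.
Qed.
Lemma nQ_point u x : D u -> Cabs (u x) * Cabs (u x) * m x <= nQ u * nQ u.
Proof. intros. rewrite nQ_sq; auto. apply P_point; auto. Qed.

End Forms.

End L6.
Import L6.

Module L7.

Ltac ceq := apply Cx_eq; simpl; ring.

Lemma HasSumC_unique {V} (f : V -> Cx) s t : HasSumC f s -> HasSumC f t -> s = t.
Proof. intros A B. rewrite <- (sumC_eq _ _ A). apply sumC_eq; auto. Qed.

Lemma Rsum_minus {W} (f g : W -> R) l : Rsum_list (fun x => f x - g x) l = Rsum_list f l - Rsum_list g l.
Proof. induction l; simpl; lra. Qed.

Section Green.
Context {V : Type} (m : V -> R) (b : V -> V -> R) (c : V -> R).
Hypothesis Hm : is_measure m.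
Hypothesis Hg : is_graph b c.
Context (D : (V -> Cx) -> Prop) (Q : (V -> Cx) -> (V -> Cx) -> Cx).
Hypothesis Hsym : sym_form m D Q.
Hypothesis HC : condC m b c D Q.

Lemma HC3 u v : D u -> Cc v ->
  HasSumC (fun x => Cmult (Cmult (u x) (Cconj (Ltilde m b c v x))) (RC (m x))) (Q u v).
Proof. apply HC. Qed.

Lemma Q_delta_sum u x : D u ->
  HasSumC (fun y => Cmult (RC (b x y)) (u y))
    (Cmult (RC (-1)) (Cminus (Q u (delta x)) (Cmult (u x) (RC (deg b x + c x))))).
Proof.
  intros Hu.
  pose proof (HC3 u (delta x) Hu (Cc_delta x)) as H.
  set (pt := fun y => if Wdec x y then Cmult (u x) (RC (deg b x + c x)) else C0).
  assert (Hpt : HasSumC pt (Cmult (u x) (RC (deg b x + c x)))).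
  { apply (HasSumC_fin' _ (x :: nil)).
    - constructor; [simpl; tauto|constructor].
    - intros y Hy; unfold pt; destruct (Wdec x y); [subst; exfalso; apply Hy; left; auto|auto].
    - simpl; unfold pt; destruct (Wdec x x); [|congruence]. unfold C0; ceq. }
  pose proof (HasSumC_minus _ _ _ _ H Hpt) as K.
  apply (HasSumC_scal (RC (-1))) in K.
  eapply HasSumC_ext; [|apply K]. intros y. simpl.
  unfold pt. destruct (Wdec x y) as [<-|ne].
  - rewrite (L_delta_eq m b c Hm Hg). rewrite (b_diag b c Hg). pose proof (m_pos m Hm x).
    unfold RC, Cconj; apply Cx_eq; simpl; field; lra.
  - rewrite (L_delta_ne m b c Hm Hg) by auto. rewrite (b_sym b c Hg x y). pose proof (m_pos m Hm y).
    unfold RC, Cconj, C0; apply Cx_eq; simpl; field; lra.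
Qed.

Lemma Q_delta u x : D u -> Q u (delta x) = Cmult (RC (m x)) (Ltilde m b c u x).
Proof.
  intros Hu. rewrite (L_formula m b c Hm Hg u x _ (Q_delta_sum u x Hu)).
  unfold RC; ceq.
Qed.

Lemma D_Ftilde u : D u -> Ftilde b u.
Proof. intros Hu x. eapply HasSumC_summable, Q_delta_sum; auto. Qed.

Lemma ip_delta u x : ip m u (delta x) = Cmult (u x) (RC (m x)).
Proof.
  unfold ip. apply sumC_eq. apply (HasSumC_fin' _ (x :: nil)).
  - constructor; [simpl; tauto|constructor].
  - intros y Hy; unfold delta; destruct (Wdec x y); [subst; exfalso; apply Hy; left; auto|]. unfold C0; ceq.
  - simpl; unfold delta; destruct (Wdec x x); [|congruence]. unfold RC, C0; ceq.
Qed.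

Lemma P_delta u x : D u -> P m Q u (delta x) = Cmult (RC (m x)) (Cplus (Ltilde m b c u x) (u x)).
Proof.
  intros Hu. unfold P, ipQ. rewrite Q_delta, ip_delta by auto. unfold RC; ceq.
Qed.

Lemma Green w : Cc w -> Re (Q w w) = Re (QN b c w w).
Proof.
  intros Hw. destruct (Cc_cexp w Hw) as [l [Hl [Hz _]]].
  assert (Hz' : forall x, ~ In x l -> Cabs (w x) = 0) by (intros; rewrite Hz, Cabs_C0; auto).
  set (S1 := Rsum_list (fun x => Cabs (w x) * Cabs (w x) * deg b x) l).
  set (g := fun x z => b x z * (fst (w x) * fst (w z) + snd (w x) * snd (w z))).
  set (S2 := Rsum_list (fun x => Rsum_list (fun z => g x z) l) l).
  set (Sc := Rsum_list (fun x => c x * Cabs (w x) * Cabs (w x)) l).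
  assert (EQ : Re (Q w w) = S1 + Sc - S2).
  { pose proof (HC3 w w (D_Cc m b c D Q HC w Hw) Hw) as H.
    assert (H2 := HasSumC_fin (fun x => Cmult (Cmult (w x) (Cconj (Ltilde m b c w x))) (RC (m x))) l Hl).
    rewrite (HasSumC_unique _ _ _ H (H2 ltac:(intros x Hx; cbv beta; rewrite Hz by auto; unfold C0; ceq))).
    unfold Re. rewrite Csum_fst. unfold S1, Sc, S2.
    rewrite <- Rsum_plus, <- Rsum_minus. apply Rsum_ext. intros x.
    assert (HSx : HasSumC (fun z => Cmult (RC (b x z)) (w z)) (Csum_list (fun z => Cmult (RC (b x z)) (w z)) l)).
    { apply HasSumC_fin; auto. intros z Hzl. rewrite Hz by auto. unfold C0; ceq. }
    pose proof (L_formula m b c Hm Hg w x _ HSx) as E. pose proof (m_pos m Hm x).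
    apply RC_solve in E; [|lra]. rewrite E.
    simpl. rewrite Csum_fst, Csum_snd.
    rewrite (Rsum_ext (fun z => fst (Cmult (RC (b x z)) (w z))) (fun z => b x z * fst (w z))) by (intros; unfold RC; simpl; ring).
    rewrite (Rsum_ext (fun z => snd (Cmult (RC (b x z)) (w z))) (fun z => b x z * snd (w z))) by (intros; unfold RC; simpl; ring).
    rewrite (Rsum_ext (fun z => g x z) (fun z => fst (w x) * (b x z * fst (w z)) + snd (w x) * (b x z * snd (w z))))
      by (intros; unfold g; ring).
    rewrite Rsum_plus, (Rsum_scal (fst (w x)) (fun z => b x z * fst (w z))), (Rsum_scal (snd (w x)) (fun z => b x z * snd (w z))). rewrite !Cabs_sq. replace (c x * Cabs (w x) * Cabs (w x)) with (c x * (Cabs (w x) * Cabs (w x))) by ring. rewrite Cabs_sq. field. lra. }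
  assert (HA : HasSumR (Aw b w) (S1 + S1 - 2 * S2)).
  { set (r1 := fun p : V * V => b (fst p) (snd p) * (Cabs (w (fst p)) * Cabs (w (fst p)))).
    set (r3 := fun p : V * V => g (fst p) (snd p)).
    assert (H1 : HasSumR r1 S1).
    { eapply HasSumR_ext; [|apply (HasSumR_list (fun x p => if Wdec (fst p) x then Cabs (w x) * Cabs (w x) * b x (snd p) else 0) (fun x => Cabs (w x) * Cabs (w x) * deg b x) l)].
      - intros p. cbv beta. rewrite Rsum_delta by auto. unfold r1. destruct (in_dec Wdec (fst p) l); [ring|].
        rewrite Hz'; auto; ring.
      - intros x _. cbv beta. apply (HasSumR_row x (fun y => Cabs (w x) * Cabs (w x) * b x y)). apply HasSumR_scal. apply (deg_sum b c Hg). }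
    assert (H2 : HasSumR (fun p => r1 (snd p, fst p)) S1) by (apply HasSumR_swap; auto).
    assert (H3 : HasSumR r3 S2).
    { eapply HasSumR_ext; [|apply (HasSumR_list (fun x p => if Wdec (fst p) x then g x (snd p) else 0) (fun x => Rsum_list (fun z => g x z) l) l)].
      - intros p. cbv beta. rewrite Rsum_delta by auto. unfold r3. destruct (in_dec Wdec (fst p) l); [auto|].
        unfold g. rewrite Hz by auto. unfold C0; simpl; ring.
      - intros x _. cbv beta. apply (HasSumR_row x (fun z => g x z)). apply HasSumR_fin; auto. intros z Hzl. unfold g. rewrite (Hz z Hzl). unfold C0; simpl; ring. }
    pose proof (HasSumR_minus _ _ _ _ (HasSumR_plus _ _ _ _ H1 H2) (HasSumR_scal 2 _ _ H3)) as K.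
    eapply HasSumR_ext; [|apply K]. intros [p1 p2]. unfold r1, r3, g, Aw; simpl. rewrite (Rmult_assoc (b p1 p2) (Cabs _)).
    rewrite (b_sym b c Hg p2 p1). rewrite !Cabs_sq. unfold Cminus, Cplus, Copp; simpl. ring. }
  assert (HB : HasSumR (Bw c w) Sc).
  { apply HasSumR_fin; auto. intros x Hx. unfold Bw; rewrite Hz'; auto; ring. }
  rewrite EQ, (ReQN b c w _ _ HA HB). field.
Qed.

Lemma nQ_Cc w : Cc w -> nQ m Q w = formnorm m (QN b c) w.
Proof. intros Hw. unfold nQ, formnorm. rewrite Green; auto. Qed.

End Green.

End L7.
Import L7.

Module L8.

Ltac ceq := apply Cx_eq; simpl; ring.

Lemma small_inv eps : 0 < eps -> exists N, forall n, (N <= n)%nat -> / (INR n + 1) < eps.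
Proof.
  intros He. destruct (archimed_cor1 eps He) as [N [H1 H2]]. exists N. intros n Hn.
  apply le_INR in Hn. assert (0 < INR N) by (apply lt_0_INR; auto).
  eapply Rle_lt_trans; [|apply H1]. apply Rinv_le_contravar; lra.
Qed.

Lemma inv_pos n : 0 < / (INR n + 1).
Proof. apply Rinv_0_lt_compat. pose proof (pos_INR n); lra. Qed.
Lemma inv_le1 n : / (INR n + 1) <= 1.
Proof. pose proof (pos_INR n). rewrite <- Rinv_1. apply Rinv_le_contravar; lra. Qed.

Lemma choice_seq {A : Type} (Pr : nat -> A -> Prop) : (forall n, exists a, Pr n a) -> exists f : nat -> A, forall n, Pr n (f n).
Proof.
  intros H. exists (fun n => proj1_sig (constructive_indefinite_description _ (H n))).
  intros n. destruct (constructive_indefinite_description _ (H n)); auto.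
Qed.

Lemma pt_bound z mx t : 0 < mx -> 0 <= t -> Cabs z * Cabs z * mx <= t * t -> Cabs z <= t / sqrt mx.
Proof.
  intros Hm Ht H. pose proof (sqrt_lt_R0 mx Hm). pose proof (Cabs_pos z).
  pose proof (sqrt_sq_eq mx (Rlt_le _ _ Hm)) as Hsq.
  assert (Cabs z * sqrt mx <= t).
  { apply Rnot_lt_le; intro Hlt. assert (H3 : t * t < (Cabs z * sqrt mx) * (Cabs z * sqrt mx)) by nra.
    replace ((Cabs z * sqrt mx) * (Cabs z * sqrt mx)) with (Cabs z * Cabs z * (sqrt mx * sqrt mx)) in H3 by ring.
    rewrite Hsq in H3. lra. }
  apply (Rmult_le_reg_r (sqrt mx)); auto. unfold Rdiv. rewrite Rmult_assoc, Rinv_l; lra.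
Qed.

Lemma Cminus_zero z w : Cminus z w = C0 -> z = w.
Proof. intros H. apply (f_equal fst) in H as H1. apply (f_equal snd) in H as H2.
  unfold Cminus, Cplus, Copp, C0 in *; simpl in *. apply Cx_eq; lra. Qed.

Lemma Czero_small z : (forall eps, 0 < eps -> Cabs z < eps) -> z = C0.
Proof.
  intros H. apply Cabs_eq0. pose proof (Cabs_pos z). destruct (Req_dec (Cabs z) 0); auto.
  specialize (H (Cabs z)). lra.
Qed.

Lemma R_small r K : 0 <= K -> (forall eps, 0 < eps -> Rabs r <= K * eps) -> r = 0.
Proof.
  intros HK H. apply Rabs_eq_0. apply Rnot_lt_le; intro Hlt.
  specialize (H (Rabs r / (2 * (K + 1)))). assert (0 < Rabs r / (2 * (K + 1))) by (apply Rdiv_lt_0_compat; lra).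
  specialize (H H0). assert (K * (Rabs r / (2 * (K + 1))) < Rabs r).
  { unfold Rdiv. replace (K * (Rabs r * / (2 * (K + 1)))) with (Rabs r * (K / (2 * (K + 1)))) by (field; lra).
    assert (K / (2 * (K + 1)) < 1) by (apply Rmult_lt_reg_r with (2 * (K + 1)); [lra|]; unfold Rdiv; rewrite Rmult_assoc, Rinv_l; lra).
    nra. }
  lra.
Qed.

Lemma cv_squeeze (u e : nat -> R) L : (forall k, Rabs (u k - L) <= e k) -> Un_cv e 0 -> Un_cv u L.
Proof.
  intros H He eps Heps. destruct (He eps Heps) as [N HN]. exists N. intros n Hn.
  specialize (HN n Hn). unfold Rdist in *. rewrite Rminus_0_r in HN. pose proof (H n).
  pose proof (Rle_abs (e n)). lra.
Qed.

Lemma ReMul_RC t z : Re (Cmult (Cconj (RC t)) z) = t * fst z.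
Proof. destruct z; unfold Re, Cmult, Cconj, RC; simpl; ring. Qed.
Lemma ReMul_i t z : Re (Cmult (Cconj (0, t)) z) = t * snd z.
Proof. destruct z; unfold Re, Cmult, Cconj; simpl; ring. Qed.

Section Main.
Context {V : Type} (m : V -> R) (b : V -> V -> R) (c : V -> R).
Hypothesis Hm : is_measure m.
Hypothesis Hg : is_graph b c.
Context (D : (V -> Cx) -> Prop) (Q : (V -> Cx) -> (V -> Cx) -> Cx).
Hypothesis Hsym : sym_form m D Q.
Hypothesis HC : condC m b c D Q.

Notation fN := (formnorm m (QN b c)).
Notation nQ := (nQ m Q).
Notation P := (P m Q).


Lemma wD_minus u v : D u -> D v -> D (fminus u v). Proof. eapply D_minus; eauto. Qed.
Lemma wD_plus u v : D u -> D v -> D (fplus u v). Proof. eapply D_plus; eauto. Qed.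
Lemma wD_scal a u : D u -> D (fscal a u). Proof. eapply D_scal; eauto. Qed.
Lemma wD_Cc u : Cc u -> D u. Proof. eapply D_Cc; eauto. Qed.
Lemma wD_zero : D zerof. Proof. eapply D_zero; eauto. Qed.
Lemma wP_delta u x : D u -> P u (delta x) = Cmult (RC (m x)) (Cplus (Ltilde m b c u x) (u x)).
Proof. intros; eapply P_delta; eauto. Qed.
Lemma wnQ_Cc w : Cc w -> nQ w = fN w. Proof. intros; eapply nQ_Cc; eauto. Qed.
Lemma wnQ_scal a u : D u -> nQ (fscal a u) = Cabs a * nQ u. Proof. intros; eapply nQ_scal; eauto. Qed.
Lemma wnQ_point u x : D u -> Cabs (u x) * Cabs (u x) * m x <= nQ u * nQ u. Proof. intros; eapply nQ_point; eauto. Qed.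
Lemma wP_plus_r u v w : D u -> D v -> D w -> P u (fplus v w) = Cplus (P u v) (P u w). Proof. intros; eapply P_plus_r; eauto. Qed.
Lemma wP_scal_r a u w : D u -> D w -> P u (fscal a w) = Cmult (Cconj a) (P u w). Proof. intros; eapply P_scal_r; eauto. Qed.
Lemma wReP_plus u v : D u -> D v -> Re (P (fplus u v) (fplus u v)) = Re (P u u) + Re (P v v) + 2 * Re (P u v).
Proof. intros; eapply ReP_plus; eauto. Qed.
Lemma wReP_minus u v : D u -> D v -> Re (P (fminus u v) (fminus u v)) = Re (P u u) + Re (P v v) - 2 * Re (P u v).
Proof. intros; eapply ReP_minus; eauto. Qed.
Lemma wReP_scal a u : D u -> Re (P (fscal a u) (fscal a u)) = Cabs a * Cabs a * Re (P u u).
Proof. intros; eapply ReP_scal; eauto. Qed.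
Lemma wP_CS u v : D u -> D v -> Rabs (Re (P u v)) <= nQ u * nQ v. Proof. intros; eapply P_CS; eauto. Qed.
Lemma wnQ_plus u v : D u -> D v -> nQ (fplus u v) <= nQ u + nQ v. Proof. intros; eapply nQ_plus; eauto. Qed.
Lemma wnQ_minus u v : D u -> D v -> nQ (fminus u v) <= nQ u + nQ v. Proof. intros; eapply nQ_minus; eauto. Qed.
Lemma wnQ_sq w : D w -> nQ w * nQ w = Re (P w w). Proof. intros; eapply nQ_sq; eauto. Qed.
Lemma wP_herm u v : D u -> D v -> P v u = Cconj (P u v). Proof. intros; eapply P_herm; eauto. Qed.
Lemma wP_nn u : D u -> 0 <= Re (P u u). Proof. intros; eapply P_nn; eauto. Qed.

Lemma qd_of_DQN v : DQN m b c v -> exists s, HasSumR (qd m b c v) s.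
Proof. intros H. apply (DQN_qd m b c) in H. apply HasSumR_exists; auto. Qed.

Lemma fN_minus u w su sw : HasSumR (qd m b c u) su -> HasSumR (qd m b c w) sw ->
  (exists s, HasSumR (qd m b c (fminus u w)) s) /\ fN (fminus u w) <= fN u + fN w.
Proof.
  intros Hu Hw. destruct (N_minus m b c Hm Hg u w su sw Hu Hw) as [s [Hs Hle]].
  split; [exists s; auto|]. rewrite (fnN m b c _ _ Hs), (fnN m b c _ _ Hu), (fnN m b c _ _ Hw). auto.
Qed.

Lemma fN_point w s x : HasSumR (qd m b c w) s -> Cabs (w x) * Cabs (w x) * m x <= fN w * fN w.
Proof.
  intros H. rewrite (fnN m b c _ _ H). rewrite sqrt_sq_eq.
  - pose proof (HasSumR_point _ _ (inr (inr x)) (qd_nn m b c Hm Hg w) H). unfold qd in H0; simpl in H0. lra.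
  - apply (HasSumR_ge0 _ _ (qd_nn m b c Hm Hg w) H).
Qed.

Lemma fN_zero : fN zerof = 0.
Proof. rewrite (fnN m b c _ _ (qd_zero m b c)). apply sqrt_0. Qed.

Lemma Cc_DQD phi : Cc phi -> DQD m b c phi.
Proof.
  intros H. split; [apply (Cc_DQN m b c Hm Hg); auto|].
  intros eps He. exists phi. split; auto.
  replace (fminus phi phi) with (@zerof V). rewrite fN_zero; auto.
  apply functional_extensionality; intros x. unfold fminus, zerof. rewrite Cminus_self; auto.
Qed.

Lemma part2_back u : D u -> (forall v, DQD m b c v -> ipQ m Q u v = C0) ->
  forall x, Cplus (Ltilde m b c u x) (u x) = C0.
Proof.
  intros Hu H x. pose proof (H (delta x) (Cc_DQD _ (Cc_delta x))).
  fold (L6.P m Q u (delta x)) in H0.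
  rewrite (wP_delta u x Hu) in H0.
  apply RC_solve in H0; [|pose proof (m_pos m Hm x); lra]. rewrite H0. unfold C0, RC; ceq.
Qed.

Lemma nQ_sym u w : D u -> D w -> nQ (fminus u w) = nQ (fminus w u).
Proof.
  intros Hu Hw. replace (fminus u w) with (fscal (RC (-1)) (fminus w u)).
  - rewrite wnQ_scal by (apply wD_minus; auto).
    rewrite Cabs_RC, (Rabs_left (-1)) by lra. ring.
  - apply functional_extensionality; intros x. unfold fscal, fminus, Cminus, Cplus, Copp, RC, Cmult; ceq.
Qed.

Lemma DQD_D v : DQD m b c v -> D v /\ forall eps, 0 < eps -> exists phi, Cc phi /\ nQ (fminus v phi) < eps.
Proof.
  intros [HvN Happ]. destruct (qd_of_DQN v HvN) as [sv Hsv].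
  destruct (choice_seq (fun n phi => Cc phi /\ fN (fminus v phi) < / (INR n + 1))) as [phi Hphi].
  { intros n. apply Happ, inv_pos. }
  assert (Hq : forall n, exists s, HasSumR (qd m b c (fminus v (phi n))) s).
  { intros n. destruct (qd_Cc m b c Hm Hg (phi n) (proj1 (Hphi n))) as [t Ht].
    apply (fN_minus _ _ _ _ Hsv Ht). }
  assert (HD : forall n, D (phi n)) by (intros; apply wD_Cc, Hphi).
  assert (Hcau : forall n k, nQ (fminus (phi n) (phi k)) <= / (INR n + 1) + / (INR k + 1)).
  { intros n k. rewrite wnQ_Cc by (apply Cc_minus; apply Hphi).
    destruct (Hq n) as [sn Hn]. destruct (Hq k) as [sk Hk].
    destruct (fN_minus _ _ _ _ Hk Hn) as [_ Hle].
    replace (fminus (fminus v (phi k)) (fminus v (phi n))) with (fminus (phi n) (phi k)) in Hle.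
    - pose proof (proj2 (Hphi n)); pose proof (proj2 (Hphi k)). lra.
    - apply functional_extensionality; intros x. unfold fminus, Cminus, Cplus, Copp; ceq. }
  destruct HC as [[_ Hclosed] _].
  destruct (Hclosed phi HD) as [u [Hu Hconv]].
  { intros eps He. destruct (small_inv (eps / 2)) as [N HN]; [lra|]. exists N. intros n k Hn Hk.
    pose proof (Hcau n k). pose proof (HN n Hn). pose proof (HN k Hk). unfold L6.nQ in H. lra. }
  assert (Evu : v = u).
  { apply functional_extensionality; intros x. apply Cminus_zero, Czero_small. intros eps He.
    pose proof (m_pos m Hm x) as Hmx. pose proof (sqrt_lt_R0 _ Hmx) as Hs.
    set (e' := eps * sqrt (m x) / 2).
    assert (He' : 0 < e') by (unfold e'; apply Rdiv_lt_0_compat; [nra|lra]).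
    destruct (Hconv e' He') as [N1 HN1]. destruct (small_inv e' He') as [N2 HN2].
    set (n := max N1 N2).
    specialize (HN1 n (Nat.le_max_l _ _)). specialize (HN2 n (Nat.le_max_r _ _)).
    destruct (Hq n) as [sn Hn].
    pose proof (fN_point _ _ x Hn) as B1.
    pose proof (wnQ_point (fminus (phi n) u) x (wD_minus _ _ (HD n) Hu)) as B2.
    apply pt_bound in B1; [|auto|apply sqrt_pos].
    apply pt_bound in B2; [|auto|apply sqrt_pos].
    pose proof (Cabs_triang (fminus v (phi n) x) (fminus (phi n) u x)).
    replace (Cplus (fminus v (phi n) x) (fminus (phi n) u x)) with (Cminus (v x) (u x)) in H
      by (unfold fminus, Cminus, Cplus, Copp; ceq).
    pose proof (proj2 (Hphi n)).
    assert (fN (fminus v (phi n)) / sqrt (m x) < e' / sqrt (m x)).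
    { unfold Rdiv. apply Rmult_lt_compat_r; [apply Rinv_0_lt_compat; auto|]. lra. }
    assert (nQ (fminus (phi n) u) / sqrt (m x) < e' / sqrt (m x)).
    { unfold Rdiv. apply Rmult_lt_compat_r; [apply Rinv_0_lt_compat; auto|]. unfold L6.nQ. lra. }
    assert (e' / sqrt (m x) = eps / 2) by (unfold e'; field; lra).
    lra. }
  subst u. split; auto.
  intros eps He. destruct (Hconv eps He) as [N HN]. exists (phi N). split; [apply Hphi|].
  rewrite nQ_sym by auto. apply HN; auto.
Qed.


Lemma Cc_zero : Cc (@zerof V).
Proof. exists nil. intros; reflexivity. Qed.

Lemma P_zero_r u : D u -> P u zerof = C0.
Proof.
  intros Hu. replace (@zerof V) with (fscal C0 (@zerof V)).
  - rewrite wP_scal_r by (auto; apply wD_zero). unfold C0, Cconj, Cmult; ceq.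
  - apply functional_extensionality; intros x. unfold fscal, zerof, C0, Cmult; ceq.
Qed.

Lemma P_Cc_zero u : D u -> (forall x, Cplus (Ltilde m b c u x) (u x) = C0) -> forall phi, Cc phi -> P u phi = C0.
Proof.
  intros Hu HL phi Hphi. destruct (Cc_cexp phi Hphi) as [l [_ [_ E]]]. rewrite E.
  assert (K : forall l, D (cexp phi l) /\ P u (cexp phi l) = C0).
  { induction l0 as [|a l0 IH].
    - rewrite cexp_nil. split; [apply wD_zero| apply P_zero_r; auto].
    - rewrite cexp_cons. destruct IH as [IH1 IH2].
      assert (Hd : D (fscal (phi a) (delta a))) by (apply wD_scal, wD_Cc, Cc_delta).
      split; [apply wD_plus; auto|].
      rewrite wP_plus_r by auto. rewrite wP_scal_r by (auto; apply wD_Cc, Cc_delta).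
      rewrite wP_delta, HL, IH2 by auto. unfold C0, RC, Cmult, Cplus, Cconj; ceq. }
  apply K.
Qed.

Lemma Cabs_i : Cabs (0, 1) = 1.
Proof. unfold Cabs; simpl. replace (0 * 0 + 1 * 1) with 1 by ring. apply sqrt_1. Qed.

Lemma part2_fwd u : D u -> (forall x, Cplus (Ltilde m b c u x) (u x) = C0) ->
  forall v, DQD m b c v -> ipQ m Q u v = C0.
Proof.
  intros Hu HL v Hv. destruct (DQD_D v Hv) as [Dv Happ]. fold (L6.P m Q u v).
  assert (Key : forall eps, 0 < eps -> Rabs (fst (P u v)) <= nQ u * eps /\ Rabs (snd (P u v)) <= nQ u * eps).
  { intros eps He. destruct (Happ eps He) as [phi [Hphi Hn]].
    assert (Dphi : D phi) by (apply wD_Cc; auto).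
    assert (Dw : D (fminus v phi)) by (apply wD_minus; auto).
    assert (E : P u v = P u (fminus v phi)).
    { replace v with (fplus (fminus v phi) phi) at 1.
      - rewrite wP_plus_r by auto. rewrite (P_Cc_zero u Hu HL phi Hphi). unfold Cplus, C0; ceq.
      - apply functional_extensionality; intros x. unfold fplus, fminus, Cminus, Cplus, Copp; ceq. }
    rewrite E. pose proof (nQ_nn m Q u). split.
    - eapply Rle_trans; [apply (wP_CS u (fminus v phi)); auto|]. apply Rmult_le_compat_l; lra.
    - pose proof (wP_CS u (fscal (0,1) (fminus v phi)) Hu (wD_scal _ _ Dw)).
      rewrite wP_scal_r in H0 by auto. rewrite wnQ_scal, Cabs_i in H0 by auto.
      replace (Re (Cmult (Cconj (0, 1)) (P u (fminus v phi)))) with (snd (P u (fminus v phi))) in H0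
        by (unfold Re, Cmult, Cconj; simpl; ring).
      eapply Rle_trans; [apply H0|]. apply Rmult_le_compat_l; lra. }
  pose proof (nQ_nn m Q u).
  apply Cx_eq; unfold C0; simpl; apply (R_small _ (nQ u)); auto; intros eps He; apply Key; auto.
Qed.

Lemma part4 v h : DQD m b c v -> HQ m b c D h -> ipQ m Q v h = C0.
Proof.
  intros Hv [Dh HL]. destruct (DQD_D v Hv) as [Dv _].
  fold (L6.P m Q v h). rewrite wP_herm by auto. unfold L6.P.
  rewrite (part2_fwd h Dh HL v Hv). unfold C0, Cconj; ceq.
Qed.

Lemma cv_const (a : R) : Un_cv (fun _ => a) a.
Proof. intros eps He. exists O. intros. unfold Rdist. rewrite Rminus_diag_eq, Rabs_R0; auto. Qed.

Lemma qd_cv (wk : nat -> V -> Cx) w : (forall x, Un_cv (fun k => Cabs (Cminus (wk k x) (w x))) 0) ->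
  forall i, Un_cv (fun k => qd m b c (wk k) i) (qd m b c w i).
Proof.
  intros H i.
  assert (HA : Un_cv (fun k => Cabs (Tw (wk k) i)) (Cabs (Tw w i))).
  { destruct i as [[p1 p2]|[x|x]].
    - apply (cv_squeeze _ (fun k => Cabs (Cminus (wk k p1) (w p1)) + Cabs (Cminus (wk k p2) (w p2)))).
      + intros k. eapply Rle_trans; [apply Cabs_rev|]. simpl.
        replace (Cminus (Cminus (wk k p1) (wk k p2)) (Cminus (w p1) (w p2))) with
          (Cminus (Cminus (wk k p1) (w p1)) (Cminus (wk k p2) (w p2))) by (unfold Cminus, Cplus, Copp; ceq).
        apply Cabs_minus_le.
      + replace 0 with (0 + 0) by ring. apply CV_plus; auto.
    - apply (cv_squeeze _ (fun k => Cabs (Cminus (wk k x) (w x)))); auto.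
      intros k; apply Cabs_rev.
    - apply (cv_squeeze _ (fun k => Cabs (Cminus (wk k x) (w x)))); auto.
      intros k; apply Cabs_rev. }
  unfold qd. apply CV_mult; [apply cv_const|]. apply CV_mult; auto.
Qed.

Lemma decomp u : D u -> exists u0 h, DQD m b c u0 /\ HQ m b c D h /\ forall x, u x = Cplus (u0 x) (h x).
Proof.
  intros Hu.
  set (E := fun r => exists phi, Cc phi /\ r = - nQ (fminus u phi)).
  assert (Eb : bound E) by (exists 0; intros r [phi [_ ->]]; pose proof (nQ_nn m Q (fminus u phi)); lra).
  assert (Ene : exists r, E r) by (exists (- nQ (fminus u zerof)); exists zerof; split; [apply Cc_zero|auto]).
  destruct (completeness E Eb Ene) as [M [HM1 HM2]].
  set (d := - M).
  assert (Hd1 : forall phi, Cc phi -> d <= nQ (fminus u phi)).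
  { intros phi Hphi. assert (- nQ (fminus u phi) <= M) by (apply HM1; exists phi; auto). unfold d; lra. }
  assert (Hd0 : 0 <= d).
  { assert (M <= 0); [|unfold d; lra]. apply HM2. intros r [phi [_ ->]]. pose proof (nQ_nn m Q (fminus u phi)); lra. }
  assert (Hd2 : forall eps, 0 < eps -> exists phi, Cc phi /\ nQ (fminus u phi) < d + eps).
  { intros eps He. apply NNPP; intro Hn.
    assert (M <= M - eps); [|lra]. apply HM2. intros r [phi [Hphi ->]].
    apply Rnot_lt_le; intro Hlt. apply Hn. exists phi; split; auto. unfold d; lra. }
  destruct (choice_seq (fun n phi => Cc phi /\ nQ (fminus u phi) < d + / (INR n + 1))) as [phi Hphi].
  { intros n. apply Hd2, inv_pos. }
  assert (HD : forall n, D (phi n)) by (intros; apply wD_Cc, Hphi).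
  assert (Da : forall n, D (fminus u (phi n))) by (intros; apply wD_minus; auto).
  assert (Hcau : forall n k, nQ (fminus (phi k) (phi n)) * nQ (fminus (phi k) (phi n)) <=
      (4 * d + 2) * (/ (INR n + 1) + / (INR k + 1))).
  { intros n k.
    set (a := fminus u (phi n)). set (bb := fminus u (phi k)).
    set (psi := fscal (RC (/ 2)) (fplus (phi n) (phi k))).
    assert (Cpsi : Cc psi) by (apply Cc_scal, Cc_plus; apply Hphi).
    assert (E1 : fminus a bb = fminus (phi k) (phi n))
      by (apply functional_extensionality; intros x; unfold a, bb, fminus, Cminus, Cplus, Copp; ceq).
    assert (E2 : fplus a bb = fscal (RC 2) (fminus u psi)).
    { apply functional_extensionality; intros x; unfold a, bb, psi, fplus, fminus, fscal, Cminus, Cplus, Copp, Cmult, RC.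
      apply Cx_eq; simpl; field. }
    pose proof (wReP_minus a bb (Da n) (Da k)) as P1. pose proof (wReP_plus a bb (Da n) (Da k)) as P2.
    rewrite E1 in P1. rewrite E2 in P2.
    rewrite <- (wnQ_sq (fminus (phi k) (phi n))) in P1 by (apply wD_minus; auto).
    rewrite <- (wnQ_sq (fscal (RC 2) (fminus u psi))) in P2 by (apply wD_scal, wD_minus; auto; apply wD_Cc; auto).
    rewrite wnQ_scal in P2 by (apply wD_minus; auto; apply wD_Cc; auto).
    rewrite Cabs_RC, Rabs_pos_eq in P2 by lra.
    rewrite <- (wnQ_sq a) in P1, P2 by apply Da. rewrite <- (wnQ_sq bb) in P1, P2 by apply Da.
    pose proof (Hd1 psi Cpsi). pose proof (proj2 (Hphi n)). pose proof (proj2 (Hphi k)).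
    fold a in H0. fold bb in H1.
    pose proof (nQ_nn m Q a). pose proof (nQ_nn m Q bb). pose proof (inv_pos n). pose proof (inv_pos k).
    pose proof (inv_le1 n). pose proof (inv_le1 k).
    set (en := / (INR n + 1)) in *. set (ek := / (INR k + 1)) in *.
    assert (nQ a * nQ a <= (d + en) * (d + en)) by nra.
    assert (nQ bb * nQ bb <= (d + ek) * (d + ek)) by nra.
    assert (4 * (d * d) <= 2 * nQ (fminus u psi) * (2 * nQ (fminus u psi))) by nra.
    nra. }
  assert (Hcau2 : forall eps, 0 < eps -> exists N, forall n k, (N <= n)%nat -> (N <= k)%nat ->
      nQ (fminus (phi k) (phi n)) < eps).
  { intros eps He. destruct (small_inv (eps * eps / (2 * (4 * d + 2)))) as [N HN].
    { apply Rdiv_lt_0_compat; nra. }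
    exists N. intros n k Hn Hk. pose proof (Hcau n k). pose proof (HN n Hn). pose proof (HN k Hk).
    assert (nQ (fminus (phi k) (phi n)) * nQ (fminus (phi k) (phi n)) < eps * eps).
    { eapply Rle_lt_trans; [apply H|].
      replace (eps * eps) with ((4 * d + 2) * (eps * eps / (2 * (4 * d + 2)) + eps * eps / (2 * (4 * d + 2)))) by (field; lra).
      apply Rmult_lt_compat_l; lra. }
    pose proof (nQ_nn m Q (fminus (phi k) (phi n))). nra. }
  destruct HC as [[_ Hclosed] _].
  destruct (Hclosed phi HD) as [u0 [Du0 Hconv]].
  { intros eps He. destruct (Hcau2 eps He) as [N HN]. exists N. intros n k Hn Hk. apply HN; auto. }
  assert (Hconv' : forall eps, 0 < eps -> exists N, forall n, (N <= n)%nat -> nQ (fminus (phi n) u0) < eps) by exact Hconv.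
  clear Hconv; rename Hconv' into Hconv.
  set (h := fminus u u0).
  assert (Dh : D h) by (apply wD_minus; auto).
  assert (Hh1 : nQ h <= d).
  { apply Rnot_lt_le; intro Hlt. set (eps := nQ h - d).
    destruct (Hconv (eps / 2)) as [N1 HN1]; [unfold eps; lra|].
    destruct (small_inv (eps / 2)) as [N2 HN2]; [unfold eps; lra|].
    set (n := max N1 N2). specialize (HN1 n (Nat.le_max_l _ _)). specialize (HN2 n (Nat.le_max_r _ _)).
    assert (Eh : h = fplus (fminus u (phi n)) (fminus (phi n) u0))
      by (apply functional_extensionality; intros x; unfold h, fplus, fminus, Cminus, Cplus, Copp; ceq).
    pose proof (wnQ_plus (fminus u (phi n)) (fminus (phi n) u0) (Da n) (wD_minus _ _ (HD n) Du0)).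
    rewrite <- Eh in H. pose proof (proj2 (Hphi n)). unfold eps in *. lra. }
  assert (Hh2 : forall psi, Cc psi -> d <= nQ (fminus h psi)).
  { intros psi Hpsi. apply Rnot_lt_le; intro Hlt. set (eps := d - nQ (fminus h psi)).
    destruct (Hconv eps) as [N1 HN1]; [unfold eps; lra|].
    specialize (HN1 N1 (Nat.le_refl _)).
    assert (Eh : fminus u (fplus (phi N1) psi) = fplus (fminus h psi) (fminus u0 (phi N1)))
      by (apply functional_extensionality; intros x; unfold h, fplus, fminus, Cminus, Cplus, Copp; ceq).
    pose proof (Hd1 _ (Cc_plus _ _ (proj1 (Hphi N1)) Hpsi)). rewrite Eh in H.
    assert (Dpsi : D psi) by (apply wD_Cc; auto).
    pose proof (wnQ_plus (fminus h psi) (fminus u0 (phi N1)) (wD_minus _ _ Dh Dpsi) (wD_minus _ _ Du0 (HD N1))).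
    rewrite (nQ_sym u0 (phi N1)) in H0 by auto. unfold eps in *. lra. }
  assert (Hvar : forall a x, Re (P h h) <= Re (P (fminus h (fscal a (delta x))) (fminus h (fscal a (delta x))))).
  { intros a x. pose proof (Hh2 _ (Cc_scal a _ (Cc_delta x))).
    assert (Dp : D (fscal a (delta x))) by (apply wD_scal, wD_Cc, Cc_delta).
    rewrite <- (wnQ_sq h), <- wnQ_sq by (auto; apply wD_minus; auto).
    pose proof (nQ_nn m Q h). nra. }
  assert (HPd : forall x, P h (delta x) = C0).
  { intros x. assert (Dd : D (delta x)) by (apply wD_Cc, Cc_delta).
    pose proof (wP_nn _ Dd) as K0.
    assert (G : forall a, 0 <= Cabs a * Cabs a * Re (P (delta x) (delta x)) - 2 * Re (Cmult (Cconj a) (P h (delta x)))).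
    { intros a. pose proof (Hvar a x). rewrite wReP_minus in H by (auto; apply wD_scal; auto).
      rewrite wReP_scal, wP_scal_r in H by auto. lra. }
    apply Cx_eq; cbn [fst snd C0].
    - assert (fst (P h (delta x)) * fst (P h (delta x)) <= 0 * Re (P (delta x) (delta x))).
      { apply quad_lemma; auto; [lra|]. intros t. pose proof (G (RC t)).
        rewrite Cabs_RC in H. replace (Rabs t * Rabs t) with (t * t) in H by (rewrite <- Rabs_mult; rewrite Rabs_pos_eq; nra).
        rewrite ReMul_RC in H. lra. }
      nra.
    - assert (snd (P h (delta x)) * snd (P h (delta x)) <= 0 * Re (P (delta x) (delta x))).
      { apply quad_lemma; auto; [lra|]. intros t. pose proof (G (0, t)).
        rewrite Cabs_sq in H. rewrite ReMul_i in H. cbn [fst snd] in H. lra. }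
      nra. }
  assert (HQh : HQ m b c D h).
  { split; auto. intros x. pose proof (HPd x). rewrite wP_delta in H by auto.
    apply RC_solve in H; [|pose proof (m_pos m Hm x); lra]. rewrite H. unfold C0, RC; ceq. }
  assert (Hpt : forall x, Un_cv (fun k => Cabs (Cminus (phi k x) (u0 x))) 0).
  { intros x eps He. pose proof (m_pos m Hm x) as Hmx. pose proof (sqrt_lt_R0 _ Hmx) as Hs.
    destruct (Hconv (eps * sqrt (m x))) as [N HN]; [nra|]. exists N. intros n Hn.
    specialize (HN n Hn). unfold Rdist. rewrite Rminus_0_r, Rabs_pos_eq by apply Cabs_pos.
    pose proof (wnQ_point (fminus (phi n) u0) x (wD_minus _ _ (HD n) Du0)).
    apply pt_bound in H; [|auto|apply sqrt_pos].
    eapply Rle_lt_trans; [apply H|]. apply (Rmult_lt_reg_r (sqrt (m x))); auto.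
    unfold Rdiv. rewrite Rmult_assoc, Rinv_l; lra. }
  assert (Fat : forall eps, 0 < eps -> exists N, exists s, HasSumR (qd m b c (fminus u0 (phi N))) s /\ sqrt s <= eps).
  { intros eps He. destruct (Hcau2 eps He) as [N HN]. exists N.
    assert (Hs : forall k, exists s, HasSumR (qd m b c (fminus (phi k) (phi N))) s)
      by (intros k; apply (qd_Cc m b c Hm Hg); apply Cc_minus; apply Hphi).
    destruct (fatou (fun k => qd m b c (fminus (phi k) (phi N))) (qd m b c (fminus u0 (phi N))) (eps * eps) N) as [s [Hs1 Hs2]].
    - apply qd_nn; auto.
    - apply qd_cv. intros x. eapply Un_cv_ext; [|apply (Hpt x)]. intros k.
      unfold fminus. f_equal. unfold Cminus, Cplus, Copp; ceq.
    - intros k Hk l Hl. destruct (Hs k) as [sk Hsk].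
      eapply Rle_trans; [apply (HasSumR_partial_le _ _ (qd_nn m b c Hm Hg _) Hsk l Hl)|].
      pose proof (HN N k (Nat.le_refl _) Hk).
      rewrite wnQ_Cc, (fnN m b c _ _ Hsk) in H by (apply Cc_minus; apply Hphi).
      pose proof (HasSumR_ge0 _ _ (qd_nn m b c Hm Hg _) Hsk).
      rewrite <- (sqrt_sq_eq sk) by auto. pose proof (sqrt_pos sk). nra.
    - exists s. split; auto. apply sqrt_le_of_sq; [lra|auto]. }
  assert (DQDu0 : DQD m b c u0).
  { destruct (Fat 1) as [N [s [Hs _]]]; [lra|].
    split.
    - destruct (qd_Cc m b c Hm Hg (phi N) (proj1 (Hphi N))) as [t Ht].
      destruct (N_plus m b c Hm Hg _ _ _ _ Hs Ht) as [r [Hr _]].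
      replace (fplus (fminus u0 (phi N)) (phi N)) with u0 in Hr.
      + apply (DQN_qd m b c). eapply HasSumR_summable; eauto.
      + apply functional_extensionality; intros x; unfold fplus, fminus, Cminus, Cplus, Copp; ceq.
    - intros eps He. destruct (Fat (eps / 2)) as [N' [s' [Hs' Hle]]]; [lra|].
      exists (phi N'). split; [apply Hphi|]. rewrite (fnN m b c _ _ Hs'). lra. }
  exists u0, h. split; auto. split; auto.
  intros x. unfold h, fminus, Cminus, Cplus, Copp; ceq.
Qed.
End Main.

End L8.
Import L8.


Theorem mainTheorem3 (V : Type) (m : V -> R) (b : V -> V -> R) (c : V -> R)
  (D : (V -> Cx) -> Prop) (Q : (V -> Cx) -> (V -> Cx) -> Cx) :
  countable V -> is_measure m -> is_graph b c ->
  sym_form m D Q -> condC m b c D Q ->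
  (forall u, D u -> Ftilde b u) /\
  (forall u, D u ->
     ((forall x, Cplus (Ltilde m b c u x) (u x) = C0) <->
      (forall v, DQD m b c v -> ipQ m Q u v = C0))) /\
  (forall v, DQD m b c v -> D v) /\
  (forall v h, DQD m b c v -> HQ m b c D h -> ipQ m Q v h = C0) /\
  (forall u, D u -> exists u0 h, DQD m b c u0 /\ HQ m b c D h /\
     forall x, u x = Cplus (u0 x) (h x)).
Proof.
  intros _ Hm Hg Hsym HC.
  split; [intros u Hu; eapply D_Ftilde; eauto|].
  split; [intros u Hu; split; [eapply part2_fwd; eauto| eapply part2_back; eauto]|].
  split; [intros v Hv; eapply DQD_D; eauto|].
  split; [intros v h Hv Hh; eapply part4; eauto|].
  intros u Hu; eapply decomp; eauto.
Qed.
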